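(* Under the hypotheses of the preceding proposition (equation for Whiting's transform) and assuming moreover $\operatorname{Im}\omega>0$, the transform $\tilde u$ satisfies, with $x^*=r^*(x)$ and primes denoting $d/dx^*$: (1) $\tilde u=O\big((x-r_+)^{2M\operatorname{Im}\omega}\big)$ and (2) $\tilde u'=O\big((x-r_+)^{2M\operatorname{Im}\omega}\big)$ as $x\to r_+$; (3) $\tilde u=O\big(e^{-\operatorname{Im}(\omega)x}x^{1+2M\operatorname{Im}\omega}\big)$ and (4) $\tilde u'=O\big(e^{-\operatorname{Im}(\omega)x}x^{1+2M\operatorname{Im}\omega}\big)$ as $x\to\infty$.
   Context: Fix $M>0$ and $a\in\mathbb{R}$ with $|a|<M$. Let $r_\pm:=M\pm\sqrt{M^2-a^2}$ and $\Delta(r):=r^2-2Mr+a^2=(r-r_+)(r-r_-)$. Let $r^*:(r_+,\infty)\to(-\infty,\infty)$ be a fixed increasing bijection with $\frac{dr^*}{dr}=\frac{r^2+a^2}{\Delta}$; a prime $'$ denotes $d/dr^*$. Complex powers $(r-r_\pm)^c$ mean $e^{c\log(r-r_\pm)}$ with the real logarithm. Radial ODE: given $\omega,m,\lambda$, set $V:=\frac{4Mram\omega-a^2m^2+\Delta(\lambda+a^2\omega^2)}{(r^2+a^2)^2}+\frac{\Delta}{(r^2+a^2)^4}\big(a^2\Delta+2Mr(r^2-a^2)\big)$. Hypotheses: $\omega\in\mathbb{C}$, $m\in\mathbb{Z}$, $\lambda\in\mathbb{C}$, $F$ smooth and compactly supported in $(r_+,\infty)$ (possibly $0$), $u$ solves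 $u''+(\omega^2-V)u=\frac{\Delta}{(r^2+a^2)^{1/2}}F$ and satisfies the mode boundary conditions: with $\xi:=\frac{i(am-2Mr_+\omega)}{r_+-r_-}$, (i) $(r-r_+)^{-\xi}u$ extends smoothly in $r$ to $r=r_+$; (ii) for constants $C_i$ and every $N$, $u=e^{i\omega r^*}\sum_{i=0}^NC_ir^{-i}+O(r^{-N-1})$ as $r\to\infty$. $R:=(r^2+a^2)^{-1/2}u$. Whiting's transform: with $\eta:=\frac{-i(am-2Mr_-\omega)}{r_+-r_-}$, $\tilde u(x^* ):=(x^2+a^2)^{1/2}(x-r_+)^{-2iM\omega}e^{-i\omega x}\int_{r_+}^\infty e^{\frac{2i\omega}{r_+-r_-}(x-r_-)(r-r_-)}(r-r_-)^{\eta}(r-r_+)^{\xi}e^{-i\omega r}R(r)\,dr$, $x\in(r_+,\infty)$, $x^*=r^*(x)$. *)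

(* Defs.v *)
From Stdlib Require Import Reals Lra ClassicalEpsilon.
Open Scope R_scope.

Definition Cx := (R * R)%type.
Definition RtoC (x : R) : Cx := (x, 0).
Definition Cadd (z w : Cx) : Cx := (fst z + fst w, snd z + snd w).
Definition Copp (z : Cx) : Cx := (- fst z, - snd z).
Definition Csub (z w : Cx) : Cx := Cadd z (Copp w).
Definition Cmul (z w : Cx) : Cx :=
  (fst z * fst w - snd z * snd w, fst z * snd w + snd z * fst w).
Definition Cscal (t : R) (z : Cx) : Cx := (t * fst z, t * snd z).
Definition Ci : Cx := (0, 1).
Definition Cnorm (z : Cx) : R := sqrt (fst z ^ 2 + snd z ^ 2).
Definition Cexp (z : Cx) : Cx := (exp (fst z) * cos (snd z), exp (fst z) * sin (snd z)).
Definition Cpow_pos (t : R) (c : Cx) : Cx := Cexp (Cscal (ln t) c).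
Fixpoint Csum (f : nat -> Cx) (N : nat) : Cx :=
  match N with
  | O => f O
  | S n => Cadd (Csum f n) (f (S n))
  end.

Definition Cderiv_at (f : R -> Cx) (x : R) (l : Cx) : Prop :=
  derivable_pt_lim (fun y => fst (f y)) x (fst l) /\
  derivable_pt_lim (fun y => snd (f y)) x (snd l).

Definition smooth_on_right (lo : R) (f : R -> Cx) : Prop :=
  exists D : nat -> R -> Cx,
    (forall x, lo < x -> D O x = f x) /\
    (forall n x, lo < x -> Cderiv_at (D n) x (D (S n) x)).

(** the restriction of f to (lo, hi) extends smoothly to [lo, hi):
    D 0 is the extension, D n its n-th derivative, all continuous up to lo *)
Definition smooth_ext_left (lo hi : R) (f : R -> Cx) : Prop :=
  exists D : nat -> R -> Cx,
    (forall x, lo < x < hi -> D O x = f x) /\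
    (forall n x, lo < x < hi -> Cderiv_at (D n) x (D (S n) x)) /\
    (forall n eps, 0 < eps -> exists d, 0 < d /\
        forall x, lo < x < lo + d -> x < hi -> Cnorm (Csub (D n x) (D n lo)) < eps).

Definition compact_support_right (lo : R) (f : R -> Cx) : Prop :=
  exists A B, lo < A /\ A <= B /\ forall x, lo < x -> (x < A \/ B < x) -> f x = (0, 0).

Definition improper_integral_R (f : R -> R) (lo v : R) : Prop :=
  forall eps, 0 < eps -> exists d B, 0 < d /\
    forall a b, lo < a < lo + d -> B < b ->
      exists pr : Riemann_integrable f a b, Rabs (RiemannInt pr - v) < eps.

Definition improper_integral (f : R -> Cx) (lo : R) (I : Cx) : Prop :=
  improper_integral_R (fun r => fst (f r)) lo (fst I) /\
  improper_integral_R (fun r => snd (f r)) lo (snd I).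

Definition CimpInt (f : R -> Cx) (lo : R) : Cx :=
  epsilon (inhabits (0, 0)) (fun I => improper_integral f lo I).

Definition rplus (M a : R) : R := M + sqrt (M ^ 2 - a ^ 2).
Definition rminus (M a : R) : R := M - sqrt (M ^ 2 - a ^ 2).
Definition Delta (M a r : R) : R := r ^ 2 - 2 * M * r + a ^ 2.

Definition tortoise (M a : R) (rstar : R -> R) : Prop :=
  (forall r, rplus M a < r -> derivable_pt_lim rstar r ((r ^ 2 + a ^ 2) / Delta M a r)) /\
  (forall r1 r2, rplus M a < r1 -> r1 < r2 -> rstar r1 < rstar r2) /\
  (forall s, exists r, rplus M a < r /\ rstar r = s).

(** g is the derivative d/d r^* of f, both viewed as functions of r in (lo, oo):
    g(x) = lim_{y -> x} (f y - f x) / (r^*(y) - r^*(x)) *)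
Definition dstar (rstar : R -> R) (lo : R) (f g : R -> Cx) : Prop :=
  forall x, lo < x -> forall eps, 0 < eps -> exists d, 0 < d /\
    forall y, lo < y -> y <> x -> Rabs (y - x) < d ->
      Cnorm (Csub (Cscal (/ (rstar y - rstar x)) (Csub (f y) (f x))) (g x)) < eps.

Definition Vpot (M a : R) (om : Cx) (m : Z) (lam : Cx) (r : R) : Cx :=
  Cadd
    (Cscal (/ (r ^ 2 + a ^ 2) ^ 2)
       (Cadd (Cadd (Cscal (4 * M * r * a * IZR m) om) (RtoC (- (a ^ 2 * IZR m ^ 2))))
             (Cscal (Delta M a r) (Cadd lam (Cscal (a ^ 2) (Cmul om om))))))
    (RtoC (Delta M a r / (r ^ 2 + a ^ 2) ^ 4 *
           (a ^ 2 * Delta M a r + 2 * M * r * (r ^ 2 - a ^ 2)))).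

Definition xi (M a : R) (om : Cx) (m : Z) : Cx :=
  Cscal (/ (rplus M a - rminus M a))
        (Cmul Ci (Csub (RtoC (a * IZR m)) (Cscal (2 * M * rplus M a) om))).
Definition eta (M a : R) (om : Cx) (m : Z) : Cx :=
  Cscal (/ (rplus M a - rminus M a))
        (Cmul (Copp Ci) (Csub (RtoC (a * IZR m)) (Cscal (2 * M * rminus M a) om))).

(** u (as a function of r) solves  u'' + (om^2 - V) u = Delta/(r^2+a^2)^{1/2} F, ' = d/dr^* *)
Definition radial_ode (M a : R) (rstar : R -> R) (om : Cx) (m : Z) (lam : Cx)
    (F u : R -> Cx) : Prop :=
  exists u1 u2 : R -> Cx,
    dstar rstar (rplus M a) u u1 /\ dstar rstar (rplus M a) u1 u2 /\
    forall r, rplus M a < r ->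
      Cadd (u2 r) (Cmul (Csub (Cmul om om) (Vpot M a om m lam r)) (u r)) =
      Cscal (Delta M a r / sqrt (r ^ 2 + a ^ 2)) (F r).

Definition bc_horizon (M a : R) (om : Cx) (m : Z) (u : R -> Cx) : Prop :=
  exists d, 0 < d /\
    smooth_ext_left (rplus M a) (rplus M a + d)
      (fun r => Cmul (Cpow_pos (r - rplus M a) (Copp (xi M a om m))) (u r)).

Definition bc_infinity (M a : R) (rstar : R -> R) (om : Cx) (u : R -> Cx) : Prop :=
  exists Cs : nat -> Cx, forall N : nat, exists K X, forall r, X < r -> rplus M a < r ->
    Cnorm (Csub (u r)
             (Cmul (Cexp (Cmul Ci (Cscal (rstar r) om)))
                   (Csum (fun i => Cscal (/ r ^ i) (Cs i)) N)))
    <= K * / r ^ (S N).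

(** Whiting's transform, as a function of x in (r_+, oo)  (value at x^* = r^*(x)) *)
Definition whiting_integrand (M a : R) (om : Cx) (m : Z) (u : R -> Cx) (x r : R) : Cx :=
  let rp := rplus M a in let rm := rminus M a in
  Cmul (Cexp (Cscal (2 * (x - rm) * (r - rm) / (rp - rm)) (Cmul Ci om)))
  (Cmul (Cpow_pos (r - rm) (eta M a om m))
  (Cmul (Cpow_pos (r - rp) (xi M a om m))
  (Cmul (Cexp (Cmul (Copp Ci) (Cscal r om)))
        (Cscal (/ sqrt (r ^ 2 + a ^ 2)) (u r))))).

Definition whiting (M a : R) (om : Cx) (m : Z) (u : R -> Cx) (x : R) : Cx :=
  let rp := rplus M a in
  Cscal (sqrt (x ^ 2 + a ^ 2))
   (Cmul (Cpow_pos (x - rp) (Cscal (-2 * M) (Cmul Ci om)))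
   (Cmul (Cexp (Cmul (Copp Ci) (Cscal x om)))
         (CimpInt (whiting_integrand M a om m u x) rp))).

Definition bigO_horizon (rp p : R) (f : R -> Cx) : Prop :=
  exists K d, 0 < d /\ forall x, rp < x < rp + d -> Cnorm (f x) <= K * Rpower (x - rp) p.

Definition bigO_infinity (rp k p : R) (f : R -> Cx) : Prop :=
  exists K X, forall x, X < x -> rp < x -> Cnorm (f x) <= K * (exp (- k * x) * Rpower x p).

(* Main.v *)
From Stdlib Require Import Reals Lra Lia Psatz ZArith ClassicalEpsilon FunctionalExtensionality.
From Coquelicot Require Import Coquelicot.
Require Import Defs.
Open Scope R_scope.

Lemma Cnorm_mod z : Cnorm z = Cmod z.
Proof. reflexivity. Qed.
Lemma Cnorm_mul z w : Cnorm (Cmul z w) = Cnorm z * Cnorm w.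
Proof. apply (Cmod_mult z w). Qed.
Lemma Cnorm_add z w : Cnorm (Cadd z w) <= Cnorm z + Cnorm w.
Proof. apply (Cmod_triangle z w). Qed.
Lemma Cnorm_ge0 z : 0 <= Cnorm z.
Proof. apply Cmod_ge_0. Qed.
Lemma Cnorm_fst z : Rabs (fst z) <= Cnorm z.
Proof. generalize (Rmax_Cmod z). unfold Cnorm, Cmod. generalize (Rmax_l (Rabs (fst z)) (Rabs (snd z))). lra. Qed.
Lemma Cnorm_snd z : Rabs (snd z) <= Cnorm z.
Proof. generalize (Rmax_Cmod z). unfold Cnorm, Cmod. generalize (Rmax_r (Rabs (fst z)) (Rabs (snd z))). lra. Qed.
Lemma Cnorm_le_sum z : Cnorm z <= Rabs (fst z) + Rabs (snd z).
Proof.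
  destruct z as [x y]. unfold Cnorm; simpl.
  apply Rsqr_incr_0_var. 2: generalize (Rabs_pos x) (Rabs_pos y); lra.
  rewrite Rsqr_sqrt by nra. unfold Rsqr.
  pose proof (Rsqr_abs x); pose proof (Rsqr_abs y); unfold Rsqr in *. generalize (Rabs_pos x) (Rabs_pos y). nra.
Qed.
Lemma Cnorm_scal t z : Cnorm (Cscal t z) = Rabs t * Cnorm z.
Proof.
  destruct z as [x y]. unfold Cnorm, Cscal; cbn [fst snd].
  replace ((t*x)^2 + (t*y)^2) with (t^2 * (x^2+y^2)) by ring.
  rewrite sqrt_mult by nra. rewrite <- sqrt_Rsqr_abs. unfold Rsqr. f_equal. f_equal. ring.
Qed.
Lemma Cnorm_exp z : Cnorm (Cexp z) = exp (fst z).
Proof.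
  unfold Cnorm, Cexp; cbn [fst snd].
  replace ((exp (fst z) * cos (snd z))^2 + (exp (fst z) * sin (snd z))^2)
    with ((exp (fst z))^2 * (sin (snd z) ^2 + cos (snd z)^2)) by ring.
  generalize (sin2_cos2 (snd z)); unfold Rsqr; intro H; replace (sin (snd z) ^ 2 + cos (snd z) ^ 2) with 1 by (rewrite <- H; ring). rewrite Rmult_1_r. apply sqrt_pow2. left; apply exp_pos.
Qed.
Lemma Cnorm_sub z w : Cnorm (Csub z w) <= Cnorm z + Cnorm w.
Proof.
  unfold Csub. eapply Rle_trans. apply Cnorm_add. right. f_equal.
  destruct w as [x y]; unfold Cnorm, Copp; cbn [fst snd]. f_equal. ring.
Qed.
Lemma Cnorm_Copp w : Cnorm (Copp w) = Cnorm w.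
Proof. destruct w as [x y]; unfold Cnorm, Copp; cbn [fst snd]. f_equal. ring. Qed.
Lemma Cpair_eq (z w : Cx) : fst z = fst w -> snd z = snd w -> z = w.
Proof. destruct z, w; simpl; intros; subst; auto. Qed.


Lemma nat_large A : exists N : nat, A < INR N.
Proof.
  destruct (archimed (Rabs A)) as [H1 _].
  exists (Z.to_nat (up (Rabs A))).
  rewrite INR_IZR_INZ, Z2Nat.id.
  - generalize (Rle_abs A); lra.
  - apply le_IZR. generalize (Rabs_pos A). lra.
Qed.

Lemma exp_mono x y : x <= y -> exp x <= exp y.
Proof. intros [H|H]. left; apply exp_increasing; auto. subst; right; auto. Qed.

Lemma cont_of_deriv f x : ex_derive f x -> continuity_pt f x.
Proof. intros [l H]. apply derivable_continuous_pt. exists l. apply is_derive_Reals. exact H. Qed.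

Lemma ex_lim2 (Phi : R -> R -> R) (lo : R) :
  (forall eps, 0 < eps -> exists d B, 0 < d /\ forall a b a' b',
      lo < a < lo + d -> lo < a' < lo + d -> B < b -> B < b' ->
      Rabs (Phi a b - Phi a' b') < eps) ->
  exists v, forall eps, 0 < eps -> exists d B, 0 < d /\ forall a b,
      lo < a < lo + d -> B < b -> Rabs (Phi a b - v) < eps.
Proof.
  intros H.
  set (w := fun n : nat => Phi (lo + / (INR n + 1)) (INR n)).
  assert (Hsel : forall d B, 0 < d -> exists N, forall n, (N <= n)%nat ->
     lo < lo + / (INR n + 1) < lo + d /\ B < INR n).
  { intros d B Hd. destruct (nat_large (Rmax B (/ d))) as [N HN].
    exists N. intros n Hn. apply le_INR in Hn.
    assert (Hmx1 := Rmax_l B (/d)). assert (Hmx2 := Rmax_r B (/d)).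
    assert (0 < / d) by (apply Rinv_0_lt_compat; lra).
    assert (0 < INR n + 1) by lra.
    split; [split|].
    - assert (0 < / (INR n + 1)) by (apply Rinv_0_lt_compat; lra). lra.
    - assert (/ (INR n + 1) < d).
      { rewrite <- (Rinv_inv d). apply Rinv_lt_contravar. nra. lra. }
      lra.
    - lra. }
  assert (Hc : Cauchy_crit w).
  { intros eps Heps. destruct (H eps Heps) as [d [B [Hd HB]]].
    destruct (Hsel d B Hd) as [N HN]. exists N. intros n m Hn Hm.
    unfold R_dist, w. destruct (HN n Hn), (HN m Hm). apply HB; auto. }
  destruct (Rcomplete.R_complete w Hc) as [v Hv]. exists v.
  intros eps Heps. destruct (H (eps/2)) as [d [B [Hd HB]]]. lra.
  exists d, B. split; auto. intros a b Ha Hb.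
  destruct (Hsel d B Hd) as [N HN]. destruct (Hv (eps/2)) as [N1 HN1]. lra.
  set (n := max N N1).
  assert (h1 := HN n (Nat.le_max_l _ _)). assert (h2 := HN1 n (Nat.le_max_r _ _)).
  unfold R_dist, w in h2. destruct h1.
  assert (h3 := HB a b (lo + / (INR n + 1)) (INR n) Ha H0 Hb H1).
  replace (Phi a b - v) with ((Phi a b - Phi (lo + / (INR n + 1)) (INR n)) +
     (Phi (lo + / (INR n + 1)) (INR n) - v)) by ring.
  eapply Rle_lt_trans. apply Rabs_triang. lra.
Qed.

Section Imp.
Variables (f : R -> R) (lo C mu : R).
Hypothesis Hmu : 0 < mu.
Hypothesis Hb : forall r, lo < r -> Rabs (f r) <= C * exp (- mu * (r - lo)).

Lemma C_nonneg : 0 <= C.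
Proof.
  assert (h := Hb (lo + 1) ltac:(lra)). assert (h2 := exp_pos (- mu * (lo + 1 - lo))).
  assert (h3 := Rabs_pos (f (lo+1))).
  destruct (Rle_or_lt 0 C); auto. nra.
Qed.

Lemma is_RInt_expo a b :
  is_RInt (fun r => C * exp (- mu * (r - lo))) a b
    (C / mu * (exp (- mu * (a - lo)) - exp (- mu * (b - lo)))).
Proof.
  replace (C / mu * (exp (- mu * (a - lo)) - exp (- mu * (b - lo)))) with
    (minus ((fun r => - C / mu * exp (- mu * (r - lo))) b) ((fun r => - C / mu * exp (- mu * (r - lo))) a)).
  2: { unfold minus, plus, opp; simpl. field. lra. }
  apply (is_RInt_derive (fun r => - C / mu * exp (- mu * (r - lo))) (fun r => C * exp (- mu * (r - lo)))). 
  - intros x _. auto_derive. auto. replace (x + - lo) with (x - lo) by ring. field. lra.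
  - intros x _. apply continuity_pt_filterlim. apply cont_of_deriv. auto_derive. auto.
Qed.

Lemma rint_bd a b (Hab : lo < a <= b) : ex_RInt f a b ->
  Rabs (RInt f a b) <= C / mu * (exp (- mu * (a - lo)) - exp (- mu * (b - lo))).
Proof.
  intros Hex.
  assert (Hg : ex_RInt (fun r => C * exp (- mu * (r - lo))) a b) by (eexists; apply is_RInt_expo).
  assert (Hg' : ex_RInt (fun r => - (C * exp (- mu * (r - lo)))) a b).
  { apply (ex_RInt_ext (fun r => opp (C * exp (- mu * (r - lo))))).
    intros; reflexivity. apply (ex_RInt_opp (fun r => C * exp (- mu * (r - lo)))); auto. }
  assert (E1 : RInt (fun r => C * exp (- mu * (r - lo))) a b = C / mu * (exp (- mu * (a - lo)) - exp (- mu * (b - lo)))).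
  { exact (is_RInt_unique _ _ _ _ (is_RInt_expo a b)). }
  assert (E2 : RInt (fun r => - (C * exp (- mu * (r - lo)))) a b = - (C / mu * (exp (- mu * (a - lo)) - exp (- mu * (b - lo))))).
  { apply (is_RInt_unique (fun r : R => - (C * exp (- mu * (r - lo)))) a b).
    apply (is_RInt_ext (fun r => opp (C * exp (- mu * (r - lo))))).
    intros; reflexivity. exact (is_RInt_opp (fun r => C * exp (- mu * (r - lo))) _ _ _ (is_RInt_expo a b)). }
  apply Rabs_le. split.
  - rewrite <- E2. apply RInt_le; auto. lra. intros x Hx.
    assert (h := Hb x ltac:(lra)). apply Rabs_le_between in h. lra.
  - rewrite <- E1. apply RInt_le; auto. lra. intros x Hx.
    assert (h := Hb x ltac:(lra)). apply Rabs_le_between in h. lra.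
Qed.

Lemma rint_bd2 x y : lo < x -> lo < y -> ex_RInt f x y ->
  Rabs (RInt f x y) <= C / mu * Rabs (exp (- mu * (x - lo)) - exp (- mu * (y - lo))).
Proof.
  intros Hx Hy Hex. destruct (Rle_or_lt x y).
  - eapply Rle_trans. apply rint_bd; [lra|auto].
    apply Rmult_le_compat_l. apply Rmult_le_pos. apply C_nonneg. left; apply Rinv_0_lt_compat; auto.
    apply Rle_abs.
  - assert (Hex' : ex_RInt f y x) by (apply ex_RInt_swap; auto).
    rewrite <- (opp_RInt_swap f y x Hex'). change (opp (RInt f y x)) with (- RInt f y x). rewrite Rabs_Ropp.
    eapply Rle_trans. apply rint_bd; [lra|auto].
    apply Rmult_le_compat_l. apply Rmult_le_pos. apply C_nonneg. left; apply Rinv_0_lt_compat; auto.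
    rewrite Rabs_minus_sym. apply Rle_abs.
Qed.

Lemma imp_value_bd v : improper_integral_R f lo v -> Rabs v <= C / mu.
Proof.
  intros Hi. apply Rle_plus_epsilon. intros eps Heps.
  destruct (Hi eps Heps) as [d [B [Hd HB]]].
  set (a := lo + Rmin d 1 / 2). set (b := Rmax B (lo + 1) + 1).
  assert (Hm1 := Rmin_l d 1). assert (Hm2 := Rmin_r d 1).
  assert (0 < Rmin d 1) by (apply Rmin_glb_lt; lra).
  assert (Hx1 := Rmax_l B (lo+1)). assert (Hx2 := Rmax_r B (lo+1)).
  destruct (HB a b) as [pr Hpr]. unfold a; lra. unfold b; lra.
  rewrite <- RInt_Reals in Hpr.
  assert (h := rint_bd a b ltac:(unfold a, b; lra) (ex_RInt_Reals_1 _ _ _ pr)).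
  assert (exp (- mu * (b - lo)) > 0) by apply exp_pos.
  assert (exp (- mu * (a - lo)) <= 1).
  { rewrite <- exp_0. apply exp_mono. unfold a. nra. }
  assert (C / mu * (exp (- mu * (a - lo)) - exp (- mu * (b - lo))) <= C / mu).
  { assert (0 <= C / mu) by (apply Rmult_le_pos; [apply C_nonneg| left; apply Rinv_0_lt_compat; auto]). nra. }
  assert (h2 := Rabs_triang_inv v (RInt f a b)). rewrite Rabs_minus_sym in Hpr. lra.
Qed.

Hypothesis Hc : forall r, lo < r -> continuity_pt f r.

Lemma exint a b : lo < a -> lo < b -> ex_RInt f a b.
Proof.
  intros Ha Hb0. apply (ex_RInt_continuous (V:=R_CompleteNormedModule)). intros z Hz.
  apply continuity_pt_filterlim. apply Hc.
  assert (Rmin a b > lo) by (apply Rmin_glb_lt; auto). lra.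
Qed.

Lemma imp_exists : exists v, improper_integral_R f lo v.
Proof.
  assert (HC := C_nonneg).
  destruct (ex_lim2 (fun a b => RInt f a b) lo) as [v Hv].
  - intros eps Heps.
    set (d := Rmin 1 (eps / (2 * (C + 1)))).
    set (B := lo + 1 + 2 * (C + 1) / (mu * mu * eps)).
    assert (0 < eps / (2 * (C + 1))) by (apply Rdiv_lt_0_compat; lra).
    assert (Hd : 0 < d) by (apply Rmin_glb_lt; lra).
    assert (Hd1 := Rmin_l 1 (eps / (2 * (C + 1)))). assert (Hd2 := Rmin_r 1 (eps / (2 * (C + 1)))).
    exists d, B. split; auto. intros a b a' b' Ha Ha' Hbb Hbb'.
    assert (HBl : lo + 1 < B).
    { unfold B. assert (0 < 2 * (C + 1) / (mu * mu * eps)). apply Rdiv_lt_0_compat. lra.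
      apply Rmult_lt_0_compat; auto. apply Rmult_lt_0_compat; auto. lra. }
    assert (E : RInt f a b - RInt f a' b' = RInt f a a' + RInt f b' b).
    { rewrite <- (RInt_Chasles f a a' b) by (apply exint; lra).
      rewrite <- (RInt_Chasles f a' b' b) by (apply exint; lra).
      unfold plus; simpl. ring. }
    rewrite E. eapply Rle_lt_trans. apply Rabs_triang.
    assert (h1 := rint_bd2 a a' ltac:(lra) ltac:(lra) (exint a a' ltac:(lra) ltac:(lra))).
    assert (h2 := rint_bd2 b' b ltac:(lra) ltac:(lra) (exint b' b ltac:(lra) ltac:(lra))).
    assert (k1 : Rabs (exp (- mu * (a - lo)) - exp (- mu * (a' - lo))) <= mu * d).
    { assert (forall z, lo < z < lo + d -> 1 - mu * d <= exp (- mu * (z - lo)) <= 1).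
      { intros z Hz. split.
        - eapply Rle_trans. 2: apply exp_ineq1_le. nra.
        - rewrite <- exp_0. apply exp_mono. nra. }
      destruct (H0 a Ha), (H0 a' Ha'). apply Rabs_le. lra. }
    assert (k2 : Rabs (exp (- mu * (b' - lo)) - exp (- mu * (b - lo))) <= / (mu * (B - lo))).
    { assert (forall z, B < z -> 0 < exp (- mu * (z - lo)) <= / (mu * (B - lo))).
      { intros z Hz. split. apply exp_pos.
        assert (0 < mu * (B - lo)) by nra.
        rewrite <- (Rinv_inv (exp _)). apply Rinv_le_contravar; auto.
        rewrite <- exp_Ropp. eapply Rle_trans. 2: apply exp_ineq1_le. nra. }
      destruct (H0 b Hbb), (H0 b' Hbb'). apply Rabs_le. lra. }
    assert (t1 : C / mu * Rabs (exp (- mu * (a - lo)) - exp (- mu * (a' - lo))) <= C * d).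
    { replace (C * d) with (C / mu * (mu * d)) by (field; lra).
      apply Rmult_le_compat_l; auto. apply Rmult_le_pos; auto. left; apply Rinv_0_lt_compat; auto. }
    assert (t2 : C / mu * Rabs (exp (- mu * (b' - lo)) - exp (- mu * (b - lo))) <= C / mu * / (mu * (B - lo))).
    { apply Rmult_le_compat_l; auto. apply Rmult_le_pos; auto. left; apply Rinv_0_lt_compat; auto. }
    assert (t3 : C * d < eps / 2).
    { assert (C * d <= C * (eps / (2 * (C + 1)))) by (apply Rmult_le_compat_l; auto).
      assert (C * (eps / (2 * (C + 1))) < eps / 2).
      { unfold Rdiv. rewrite Rinv_mult. 
        assert (0 < / (C+1)) by (apply Rinv_0_lt_compat; lra).
        assert (C * / (C+1) < 1). { apply (Rmult_lt_reg_r (C+1)). lra. field_simplify; lra. }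
        nra. }
      lra. }
    assert (t4 : C / mu * / (mu * (B - lo)) < eps / 2).
    { unfold B. replace (lo + 1 + 2 * (C + 1) / (mu * mu * eps) - lo) with (1 + 2 * (C + 1) / (mu * mu * eps)) by ring.
      set (q := 2 * (C + 1) / (mu * mu * eps)).
      assert (Hq : 0 < q). { unfold q. apply Rdiv_lt_0_compat. lra. repeat apply Rmult_lt_0_compat; auto. }
      assert (C / mu * / (mu * (1 + q)) < C / mu * / (mu * q) + eps/2 /\ C / mu * / (mu * q) <= eps / 2 * (C / (C+1))).
      2: { destruct H0. assert (eps / 2 * (C / (C + 1)) < eps/2).
           { assert (C / (C+1) < 1). apply (Rmult_lt_reg_r (C+1)). lra. field_simplify; lra. nra. }
           assert (C / mu * / (mu * (1 + q)) <= C / mu * / (mu * q)).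
           { apply Rmult_le_compat_l. apply Rmult_le_pos; auto. left; apply Rinv_0_lt_compat; auto.
             apply Rinv_le_contravar. nra. nra. }
           lra. }
      split.
      + assert (C / mu * / (mu * (1 + q)) <= C / mu * / (mu * q)).
        { apply Rmult_le_compat_l. apply Rmult_le_pos; auto. left; apply Rinv_0_lt_compat; auto.
          apply Rinv_le_contravar. nra. nra. }
        lra.
      + unfold q. right. field. repeat split; lra. }
    lra.
  - exists v. intros eps Heps. destruct (Hv eps Heps) as [d [B [Hd HB]]].
    exists (Rmin d 1), (Rmax B (lo + 1)). split. apply Rmin_glb_lt; lra.
    intros a b Ha Hbb.
    assert (Hm1 := Rmin_l d 1). assert (Hm2 := Rmin_r d 1).
    assert (Hx1 := Rmax_l B (lo+1)). assert (Hx2 := Rmax_r B (lo+1)).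
    exists (ex_RInt_Reals_0 _ _ _ (exint a b ltac:(lra) ltac:(lra))).
    rewrite <- RInt_Reals. apply HB; lra.
Qed.
End Imp.

Lemma imp_lin f g lo v w k :
  improper_integral_R f lo v -> improper_integral_R g lo w ->
  improper_integral_R (fun r => f r + k * g r) lo (v + k * w).
Proof.
  intros Hf Hg eps Heps.
  destruct (Hf (eps/2)) as [d1 [B1 [Hd1 H1]]]. lra.
  destruct (Hg (eps / (2 * (Rabs k + 1)))) as [d2 [B2 [Hd2 H2]]].
  { apply Rdiv_lt_0_compat. lra. generalize (Rabs_pos k); lra. }
  exists (Rmin d1 d2), (Rmax B1 B2). split. apply Rmin_glb_lt; auto.
  intros a b Ha Hbb.
  assert (Hm1 := Rmin_l d1 d2). assert (Hm2 := Rmin_r d1 d2).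
  assert (Hx1 := Rmax_l B1 B2). assert (Hx2 := Rmax_r B1 B2).
  destruct (H1 a b ltac:(lra) ltac:(lra)) as [p1 h1].
  destruct (H2 a b ltac:(lra) ltac:(lra)) as [p2 h2].
  assert (e1 := ex_RInt_Reals_1 _ _ _ p1). assert (e2 := ex_RInt_Reals_1 _ _ _ p2).
  assert (e3 : ex_RInt (fun r => f r + k * g r) a b).
  { apply (ex_RInt_ext (fun r => plus (f r) (scal k (g r)))). intros; reflexivity.
    apply (ex_RInt_plus (V:=R_NormedModule) f (fun r => scal k (g r))); auto.
    apply (ex_RInt_scal (V:=R_NormedModule) g); auto. }
  exists (ex_RInt_Reals_0 _ _ _ e3). rewrite <- RInt_Reals.
  rewrite <- RInt_Reals in h1, h2.
  replace (RInt (fun r => f r + k * g r) a b) with (RInt f a b + k * RInt g a b).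
  2: { rewrite (RInt_ext (fun r => f r + k * g r) (fun r => plus (f r) (scal k (g r)))) by (intros; reflexivity).
       rewrite (RInt_plus (V:=R_CompleteNormedModule) f (fun r => scal k (g r))); auto.
       rewrite (RInt_scal (V:=R_CompleteNormedModule) g); auto.
       apply (ex_RInt_scal (V:=R_NormedModule) g); auto. }
  replace (RInt f a b + k * RInt g a b - (v + k * w)) with
    ((RInt f a b - v) + k * (RInt g a b - w)) by ring.
  eapply Rle_lt_trans. apply Rabs_triang. rewrite Rabs_mult.
  assert (Rabs k * Rabs (RInt g a b - w) <= Rabs k * (eps / (2 * (Rabs k + 1)))).
  { apply Rmult_le_compat_l. apply Rabs_pos. lra. }
  assert (Rabs k * (eps / (2 * (Rabs k + 1))) < eps / 2).
  { assert (Rabs k / (Rabs k + 1) < 1). apply (Rmult_lt_reg_r (Rabs k+1)). generalize (Rabs_pos k); lra.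
    field_simplify; generalize (Rabs_pos k); lra.
    replace (Rabs k * (eps / (2 * (Rabs k + 1)))) with (eps / 2 * (Rabs k / (Rabs k + 1))).
    nra. field. generalize (Rabs_pos k); lra. }
  lra.
Qed.


Lemma deriv_lip (phi phi' : R -> R) x y K :
  (forall s, Rmin x y <= s <= Rmax x y -> derivable_pt_lim phi s (phi' s)) ->
  (forall s, Rmin x y <= s <= Rmax x y -> Rabs (phi' s) <= K) ->
  Rabs (phi y - phi x) <= K * Rabs (y - x).
Proof.
  intros Hd Hb. destruct (Rtotal_order x y) as [H|[H|H]].
  - rewrite Rmin_left, Rmax_right in * by lra.
    destruct (MVT_cor2 phi phi' x y H Hd) as [c [Hc1 Hc2]].
    rewrite Hc1, Rabs_mult. apply Rmult_le_compat_r. apply Rabs_pos. apply Hb; lra.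
  - subst. replace (phi y - phi y) with 0 by ring. replace (y - y) with 0 by ring.
    rewrite Rabs_R0. assert (h := Hb y ltac:(rewrite Rmin_left, Rmax_left; lra)).
    generalize (Rabs_pos (phi' y)). nra.
  - rewrite Rmin_right, Rmax_left in * by lra.
    destruct (MVT_cor2 phi phi' y x H Hd) as [c [Hc1 Hc2]].
    rewrite <- Rabs_Ropp. replace (- (phi y - phi x)) with (phi x - phi y) by ring.
    rewrite Hc1, Rabs_mult. rewrite <- (Rabs_Ropp (y - x)). replace (- (y - x)) with (x - y) by ring.
    apply Rmult_le_compat_r. apply Rabs_pos. apply Hb; lra.
Qed.

Lemma betw x0 y s z : Rmin x0 s <= z <= Rmax x0 s -> Rmin x0 y <= s <= Rmax x0 y ->
  Rmin x0 y <= z <= Rmax x0 y.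
Proof. unfold Rmin, Rmax; repeat destruct Rle_dec; lra. Qed.
Lemma betw_abs x0 y s : Rmin x0 y <= s <= Rmax x0 y -> Rabs (s - x0) <= Rabs (y - x0).
Proof. unfold Rmin, Rmax; destruct Rle_dec; intros; apply Rabs_le; split;
  [ |rewrite Rabs_pos_eq by lra; lra| |rewrite Rabs_left1 by lra; lra];
  [rewrite Rabs_pos_eq by lra; lra|rewrite Rabs_left1 by lra; lra]. Qed.

Lemma imp_deriv (lo xlo C mu : R) (f f1 f2 : R -> R -> R) (I : R -> R) (J x0 : R) :
  0 < mu -> xlo < x0 ->
  (forall t r, xlo < t -> lo < r -> derivable_pt_lim (fun s => f s r) t (f1 t r)) ->
  (forall t r, xlo < t -> lo < r -> derivable_pt_lim (fun s => f1 s r) t (f2 t r)) ->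
  (forall t r, xlo < t -> lo < r -> Rabs (f2 t r) <= C * exp (- mu * (r - lo))) ->
  (forall t, xlo < t -> improper_integral_R (f t) lo (I t)) ->
  improper_integral_R (f1 x0) lo J ->
  derivable_pt_lim I x0 J.
Proof.
  intros Hmu Hx0 D1 D2 B2 HI HJ.
  assert (HC : 0 <= C).
  { assert (h := B2 x0 (lo+1) Hx0 ltac:(lra)). assert (h2 := exp_pos (- mu * (lo + 1 - lo))).
    generalize (Rabs_pos (f2 x0 (lo+1))). destruct (Rle_or_lt 0 C); auto. nra. }
  assert (Key : forall y, xlo < y ->
     Rabs (I y - I x0 - (y - x0) * J) <= (y - x0)^2 * C / mu).
  { intros y Hy.
    assert (Hint := imp_lin (fun r => f y r + (-1) * f x0 r) (f1 x0) lo (I y + (-1) * I x0) J (- (y - x0))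
       (imp_lin (f y) (f x0) lo (I y) (I x0) (-1) (HI y Hy) (HI x0 Hx0)) HJ).
    replace (I y - I x0 - (y - x0) * J) with (I y + -1 * I x0 + - (y - x0) * J) by ring.
    replace ((y - x0)^2 * C / mu) with (((y - x0)^2 * C) / mu) by ring.
    refine (imp_value_bd (fun r => f y r + -1 * f x0 r + - (y - x0) * f1 x0 r) lo ((y - x0)^2 * C) mu Hmu _ _ Hint).
    intros r Hr.
    set (phi := fun s => f s r - (s - x0) * f1 x0 r).
    set (phi' := fun s => f1 s r - f1 x0 r).
    assert (Hmm : forall s, Rmin x0 y <= s <= Rmax x0 y -> xlo < s).
    { intros s Hs. assert (xlo < Rmin x0 y) by (apply Rmin_glb_lt; auto). lra. }
    assert (E : f y r + -1 * f x0 r + - (y - x0) * f1 x0 r = phi y - phi x0).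
    { unfold phi. ring. }
    rewrite E.
    assert (L1 : Rabs (phi y - phi x0) <= (C * exp (- mu * (r - lo)) * Rabs (y - x0)) * Rabs (y - x0)).
    { apply (deriv_lip phi phi').
      - intros s Hs. unfold phi, phi'.
        apply (derivable_pt_lim_minus (fun s => f s r) (fun s => (s - x0) * f1 x0 r)).
        apply D1; auto.
        apply is_derive_Reals. auto_derive; auto. ring.
      - intros s Hs. unfold phi'.
        eapply Rle_trans.
        apply (deriv_lip (fun s => f1 s r) (fun s => f2 s r) x0 s (C * exp (- mu * (r - lo)))).
        + intros z Hz. apply D2; auto. apply Hmm. eapply betw; eauto.
        + intros z Hz. apply B2; auto. apply Hmm. eapply betw; eauto.
        + apply Rmult_le_compat_l. apply Rmult_le_pos; auto. left; apply exp_pos.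
          apply betw_abs; auto. }
    eapply Rle_trans. apply L1. right. assert (hh := Rsqr_abs (y - x0)). unfold Rsqr in hh. 
    replace ((y - x0) ^ 2) with ((y - x0) * (y - x0)) by ring. rewrite hh. ring. }
  intros eps Heps.
  set (del := Rmin (x0 - xlo) (eps * mu / (C + 1))).
  assert (Hdel : 0 < del).
  { apply Rmin_glb_lt. lra. apply Rdiv_lt_0_compat. nra. lra. }
  exists (mkposreal del Hdel). intros h Hh Hhd. simpl in Hhd.
  assert (Hd1 : del <= x0 - xlo) by apply Rmin_l.
  assert (Hd2 : del <= eps * mu / (C + 1)) by apply Rmin_r.
  assert (Hy : xlo < x0 + h). { assert (h2 := Rle_abs (-h)). rewrite Rabs_Ropp in h2. lra. }
  assert (K := Key (x0 + h) Hy). replace (x0 + h - x0) with h in K by ring.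
  replace ((I (x0 + h) - I x0) / h - J) with ((I (x0 + h) - I x0 - h * J) / h) by (field; auto).
  unfold Rdiv at 1. rewrite Rabs_mult, Rabs_inv.
  assert (0 < Rabs h) by (apply Rabs_pos_lt; auto).
  apply (Rmult_lt_reg_r (Rabs h)); auto. rewrite Rmult_assoc, Rinv_l by lra. rewrite Rmult_1_r.
  eapply Rle_lt_trans. apply K. assert (hh := Rsqr_abs h). unfold Rsqr in hh.
  replace (h ^ 2) with (h * h) by ring. rewrite hh.
  assert (Rabs h * C / mu < eps).
  { apply (Rmult_lt_reg_r mu); auto. field_simplify; try lra.
    assert (Rabs h * C <= Rabs h * (C+1)) by nra.
    assert (Rabs h * (C + 1) < eps * mu / (C + 1) * (C+1)) by nra.
    replace (eps * mu / (C + 1) * (C + 1)) with (eps * mu) in H1 by (field; lra). lra. }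
  replace (Rabs h * Rabs h * C / mu) with ((Rabs h * C / mu) * Rabs h) by (field; lra).
  nra.
Qed.


Definition Ccont (f : R -> Cx) r :=
  continuity_pt (fun y => fst (f y)) r /\ continuity_pt (fun y => snd (f y)) r.

Lemma cont_ext f g x : (forall y, f y = g y) -> continuity_pt f x -> continuity_pt g x.
Proof. intros H. replace g with f; auto. apply functional_extensionality; auto. Qed.
Lemma dpl_ext f g x l l' : (forall y, f y = g y) -> l = l' -> derivable_pt_lim f x l -> derivable_pt_lim g x l'.
Proof. intros H <-. replace g with f; auto. apply functional_extensionality; auto. Qed.

Lemma Ccont_mul f g r : Ccont f r -> Ccont g r -> Ccont (fun y => Cmul (f y) (g y)) r.
Proof.
  intros [f1 f2] [g1 g2]. split.
  - apply (cont_ext (fun y => fst (f y) * fst (g y) - snd (f y) * snd (g y))). reflexivity.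
    apply continuity_pt_minus; apply continuity_pt_mult; auto.
  - apply (cont_ext (fun y => fst (f y) * snd (g y) + snd (f y) * fst (g y))). reflexivity.
    apply continuity_pt_plus; apply continuity_pt_mult; auto.
Qed.
Lemma Ccont_scal s f r : continuity_pt s r -> Ccont f r -> Ccont (fun y => Cscal (s y) (f y)) r.
Proof.
  intros hs [f1 f2]. split.
  - apply (cont_ext (fun y => s y * fst (f y))). reflexivity. apply continuity_pt_mult; auto.
  - apply (cont_ext (fun y => s y * snd (f y))). reflexivity. apply continuity_pt_mult; auto.
Qed.
Lemma Ccont_const z r : Ccont (fun _ => z) r.
Proof. split; apply continuity_pt_const; intros ? ?; reflexivity. Qed.
Lemma Ccont_exp f r : Ccont f r -> Ccont (fun y => Cexp (f y)) r.
Proof.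
  intros [f1 f2]. split.
  - apply (cont_ext (fun y => exp (fst (f y)) * cos (snd (f y)))). reflexivity.
    apply continuity_pt_mult.
    apply (continuity_pt_comp (fun y => fst (f y)) exp); auto. apply derivable_continuous_pt, derivable_pt_exp.
    apply (continuity_pt_comp (fun y => snd (f y)) cos); auto. apply derivable_continuous_pt, derivable_pt_cos.
  - apply (cont_ext (fun y => exp (fst (f y)) * sin (snd (f y)))). reflexivity.
    apply continuity_pt_mult.
    apply (continuity_pt_comp (fun y => fst (f y)) exp); auto. apply derivable_continuous_pt, derivable_pt_exp.
    apply (continuity_pt_comp (fun y => snd (f y)) sin); auto. apply derivable_continuous_pt, derivable_pt_sin.
Qed.
Lemma Ccont_norm f r : Ccont f r -> continuity_pt (fun y => Cnorm (f y)) r.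
Proof.
  intros [f1 f2]. unfold Cnorm.
  apply (continuity_pt_comp (fun y => fst (f y) ^ 2 + snd (f y) ^ 2) sqrt).
  - apply (cont_ext (fun y => fst (f y) * fst (f y) + snd (f y) * snd (f y))). intros; ring.
    apply continuity_pt_plus; apply continuity_pt_mult; auto.
  - apply continuity_pt_sqrt. nra.
Qed.

Lemma Cderiv_ext f g x l : (forall y, f y = g y) -> Cderiv_at f x l -> Cderiv_at g x l.
Proof. intros H. replace g with f; auto. apply functional_extensionality; auto. Qed.
Lemma Cderiv_mul f g x lf lg : Cderiv_at f x lf -> Cderiv_at g x lg ->
  Cderiv_at (fun y => Cmul (f y) (g y)) x (Cadd (Cmul lf (g x)) (Cmul (f x) lg)).
Proof.
  intros [f1 f2] [g1 g2]. split.
  - eapply dpl_ext. 3: apply (derivable_pt_lim_minus ((fun y => fst (f y)) * (fun y => fst (g y)))%F ((fun y => snd (f y)) * (fun y => snd (g y)))%F); apply derivable_pt_lim_mult; eauto.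
    reflexivity. simpl. ring.
  - eapply dpl_ext. 3: apply (derivable_pt_lim_plus ((fun y => fst (f y)) * (fun y => snd (g y)))%F ((fun y => snd (f y)) * (fun y => fst (g y)))%F); apply derivable_pt_lim_mult; eauto.
    reflexivity. simpl. ring.
Qed.
Lemma Cderiv_scal s f x ls lf : derivable_pt_lim s x ls -> Cderiv_at f x lf ->
  Cderiv_at (fun y => Cscal (s y) (f y)) x (Cadd (Cscal ls (f x)) (Cscal (s x) lf)).
Proof.
  intros hs [f1 f2]. split.
  - eapply dpl_ext. 3: apply (derivable_pt_lim_mult s (fun y => fst (f y))); eauto. reflexivity. simpl. ring.
  - eapply dpl_ext. 3: apply (derivable_pt_lim_mult s (fun y => snd (f y))); eauto. reflexivity. simpl. ring.
Qed.
Lemma Cderiv_expo h c x lh : derivable_pt_lim h x lh ->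
  Cderiv_at (fun y => Cexp (Cscal (h y) c)) x (Cscal lh (Cmul c (Cexp (Cscal (h x) c)))).
Proof.
  intros Hh. apply is_derive_Reals in Hh.
  assert (Ex : ex_derive h x) by (exists lh; auto).
  assert (Eq := is_derive_unique h x lh Hh).
  split; apply is_derive_Reals; unfold Cexp, Cscal, Cmul; cbn [fst snd].
  - apply (is_derive_ext (fun y => exp (h y * fst c) * cos (h y * snd c))). reflexivity.
    auto_derive. repeat split; auto. replace (Derive (fun x0 => h x0) x) with lh by (rewrite <- Eq; reflexivity). ring.
  - apply (is_derive_ext (fun y => exp (h y * fst c) * sin (h y * snd c))). reflexivity.
    auto_derive. repeat split; auto. replace (Derive (fun x0 => h x0) x) with lh by (rewrite <- Eq; reflexivity). ring.
Qed.


Lemma kerr_facts M a : 0 < M -> Rabs a < M ->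
  0 < rplus M a /\ 0 <= rminus M a /\ rminus M a < rplus M a /\
  (forall r, Delta M a r = (r - rplus M a) * (r - rminus M a)).
Proof.
  intros HM Ha.
  assert (Ha2 : a^2 < M^2).
  { assert (h := Rabs_pos a). rewrite <- (pow2_abs a). nra. }
  set (S := sqrt (M ^ 2 - a ^ 2)).
  assert (HS : 0 < S) by (apply sqrt_lt_R0; lra).
  assert (HS2 : S * S = M^2 - a^2) by (apply sqrt_sqrt; lra).
  assert (HSM : S <= M).
  { destruct (Rle_or_lt S M); auto. assert (a^2 >= 0) by nra. nra. }
  unfold rplus, rminus, Delta. fold S. repeat split; try lra.
  intros r. nra.
Qed.

Lemma Delta_pos M a r : 0 < M -> Rabs a < M -> rplus M a < r -> 0 < Delta M a r.
Proof.
  intros HM Ha Hr. destruct (kerr_facts M a HM Ha) as [h1 [h2 [h3 h4]]].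
  rewrite h4. apply Rmult_lt_0_compat; lra.
Qed.

Lemma fst_Ciom om : fst (Cmul Ci om) = - snd om.
Proof. unfold Cmul, Ci; simpl. ring. Qed.

Lemma fst_xi M a om m : fst (xi M a om m) = 2 * M * rplus M a * snd om / (rplus M a - rminus M a).
Proof. unfold xi, Cscal, Cmul, Csub, Cadd, Copp, Ci, RtoC; cbn [fst snd]. unfold Rdiv. ring. Qed.
Lemma fst_eta M a om m : fst (eta M a om m) = - (2 * M * rminus M a * snd om / (rplus M a - rminus M a)).
Proof. unfold eta, Cscal, Cmul, Csub, Cadd, Copp, Ci, RtoC; cbn [fst snd]. unfold Rdiv. ring. Qed.
Lemma Cnorm_pow t c : Cnorm (Cpow_pos t c) = exp (fst c * ln t).
Proof. unfold Cpow_pos. rewrite Cnorm_exp. unfold Cscal; simpl. f_equal; ring. Qed.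
Lemma Cnorm_sub_le z w : Cnorm z <= Cnorm (Csub z w) + Cnorm w.
Proof.
  replace z with (Cadd (Csub z w) w) at 1. apply Cnorm_add.
  apply Cpair_eq; unfold Cadd, Csub, Copp; simpl; ring.
Qed.

Lemma pow_exp_bound p beta t0 : 0 < beta -> 0 < t0 ->
  exists C, 0 < C /\ forall t, t0 <= t -> exp (p * ln t) <= C * exp (beta * t).
Proof.
  intros Hb Ht0.
  set (q := Rabs p + 1). set (eps := beta / q).
  assert (Hq : 0 < q) by (unfold q; generalize (Rabs_pos p); lra).
  assert (He : 0 < eps) by (unfold eps; apply Rdiv_lt_0_compat; auto).
  exists (exp (Rabs p * (Rabs (ln t0) + Rabs (1 + ln eps)))). split. apply exp_pos.
  intros t Ht. rewrite <- exp_plus. apply exp_mono.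
  assert (Htp : 0 < t) by lra.
  assert (Hl : ln t <= eps * t - 1 - ln eps).
  { assert (h := exp_ineq1_le (ln (eps * t))). rewrite exp_ln in h by nra.
    rewrite ln_mult in h by lra. lra. }
  assert (Hlt : ln t0 <= ln t) by (apply ln_le; lra).
  assert (Hbt : 0 <= beta * t) by nra.
  assert (Hpe : Rabs p * eps <= beta).
  { unfold eps. replace (Rabs p * (beta / q)) with (beta * (Rabs p / q)) by (field; lra).
    assert (Rabs p / q <= 1). { apply (Rmult_le_reg_r q); auto. unfold Rdiv; rewrite Rmult_assoc, Rinv_l by lra. unfold q; lra. }
    nra. }
  assert (h1 := Rle_abs (ln t0)). assert (h2 := Rle_abs (- ln t0)). rewrite Rabs_Ropp in h2.
  assert (h3 := Rle_abs (-(1 + ln eps))). rewrite Rabs_Ropp in h3.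
  assert (h4 := Rabs_pos p).
  destruct (Rle_or_lt 0 p).
  - rewrite Rabs_pos_eq in * by auto.
    assert (p * ln t <= p * (eps * t - 1 - ln eps)) by (apply Rmult_le_compat_l; auto).
    assert (p * eps * t <= beta * t) by (apply Rmult_le_compat_r; lra).
    assert (0 <= p * Rabs (ln t0)) by (apply Rmult_le_pos; auto; apply Rabs_pos).
    nra.
  - rewrite Rabs_left in * by auto.
    assert (p * ln t <= p * ln t0) by (apply Rmult_le_compat_neg_l; lra).
    assert (0 <= -p * Rabs (1 + ln eps)) by (apply Rmult_le_pos; [lra| apply Rabs_pos]).
    nra.
Qed.

Lemma lin_exp_bound beta t : 0 < beta -> 0 <= t -> t * exp (- beta * t) <= / beta.
Proof.
  intros Hb Ht. assert (h := exp_ineq1_le (beta * t)).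
  assert (h2 : exp (- beta * t) * exp (beta * t) = 1).
  { rewrite <- exp_plus. replace (- beta * t + beta * t) with 0 by ring. apply exp_0. }
  assert (h3 := exp_pos (- beta * t)).
  apply (Rmult_le_reg_l beta); auto. rewrite Rinv_r by lra. nra.
Qed.


Lemma cont_unfold (f : R -> R) x :
  (forall eps, 0 < eps -> exists alp, 0 < alp /\ forall y, y <> x -> Rabs (y - x) < alp -> Rabs (f y - f x) < eps) ->
  continuity_pt f x.
Proof.
  intros H eps Heps. destruct (H eps Heps) as [alp [Ha Hy]]. exists alp. split; auto.
  intros y [[_ Hxy] Hd]. apply Hy; auto.
Qed.

Lemma dstar_cont rstar lo f g :
  (forall r, lo < r -> continuity_pt rstar r) ->
  (forall r1 r2, lo < r1 -> r1 < r2 -> rstar r1 < rstar r2) ->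
  dstar rstar lo f g -> forall r, lo < r -> Ccont f r.
Proof.
  intros Hc Hm Hd r Hr.
  assert (Key : forall eps, 0 < eps -> exists alp, 0 < alp /\ forall y, y <> r -> Rabs (y - r) < alp ->
            Cnorm (Csub (f y) (f r)) < eps).
  { intros eps Heps. destruct (Hd r Hr 1 ltac:(lra)) as [d [Hd0 Hdd]].
    set (e2 := eps / (Cnorm (g r) + 1)).
    assert (He2 : 0 < e2). { unfold e2. apply Rdiv_lt_0_compat; auto. generalize (Cnorm_ge0 (g r)); lra. }
    destruct (Hc r Hr e2 He2) as [alp2 [Ha2 Hc2]].
    exists (Rmin d (Rmin alp2 (r - lo))). split.
    { apply Rmin_glb_lt; auto. apply Rmin_glb_lt; lra. }
    intros y Hy Hyr.
    assert (m1 := Rmin_l d (Rmin alp2 (r - lo))). assert (m2 := Rmin_r d (Rmin alp2 (r - lo))).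
    assert (m3 := Rmin_l alp2 (r - lo)). assert (m4 := Rmin_r alp2 (r - lo)).
    assert (Hy0 : lo < y). { assert (h := Rle_abs (- (y - r))). rewrite Rabs_Ropp in h. lra. }
    assert (HD : rstar y - rstar r <> 0).
    { destruct (Rtotal_order y r) as [h|[h|h]]. assert (h2 := Hm y r Hy0 h); lra. contradiction.
      assert (h2 := Hm r y Hr h); lra. }
    assert (h1 := Hdd y Hy0 Hy ltac:(lra)).
    assert (h2 : Rabs (rstar y - rstar r) < e2).
    { apply (Hc2 y). split. split. exact I. intro; subst; auto. simpl. unfold R_dist. lra. }
    assert (h3 : Cnorm (Cscal (/ (rstar y - rstar r)) (Csub (f y) (f r))) < Cnorm (g r) + 1).
    { assert (h4 := Cnorm_sub_le (Cscal (/ (rstar y - rstar r)) (Csub (f y) (f r))) (g r)). lra. }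
    rewrite Cnorm_scal, Rabs_inv in h3.
    assert (0 < Rabs (rstar y - rstar r)) by (apply Rabs_pos_lt; auto).
    assert (Cnorm (Csub (f y) (f r)) < (Cnorm (g r) + 1) * Rabs (rstar y - rstar r)).
    { apply (Rmult_lt_reg_l (/ Rabs (rstar y - rstar r))). apply Rinv_0_lt_compat; auto.
      replace (/ Rabs (rstar y - rstar r) * ((Cnorm (g r) + 1) * Rabs (rstar y - rstar r))) with (Cnorm (g r) + 1)
        by (field; lra). auto. }
    assert ((Cnorm (g r) + 1) * Rabs (rstar y - rstar r) <= (Cnorm (g r) + 1) * e2).
    { apply Rmult_le_compat_l. generalize (Cnorm_ge0 (g r)); lra. lra. }
    assert ((Cnorm (g r) + 1) * e2 = eps) by (unfold e2; field; generalize (Cnorm_ge0 (g r)); lra).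
    lra. }
  split; apply cont_unfold; intros eps Heps; destruct (Key eps Heps) as [alp [Ha Hy]];
    exists alp; split; auto; intros y Hy1 Hy2; specialize (Hy y Hy1 Hy2).
  - eapply Rle_lt_trans; [|apply Hy]. replace (fst (f y) - fst (f r)) with (fst (Csub (f y) (f r))) by (unfold Csub, Cadd, Copp; simpl; ring).
    apply Cnorm_fst.
  - eapply Rle_lt_trans; [|apply Hy]. replace (snd (f y) - snd (f r)) with (snd (Csub (f y) (f r))) by (unfold Csub, Cadd, Copp; simpl; ring).
    apply Cnorm_snd.
Qed.

Lemma tort_cont M a rstar : tortoise M a rstar -> forall r, rplus M a < r -> continuity_pt rstar r.
Proof.
  intros [H1 _] r Hr. apply derivable_continuous_pt. exists ((r ^ 2 + a ^ 2) / Delta M a r). apply H1; auto.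
Qed.

Lemma u_cont M a rstar om m lam F u : tortoise M a rstar -> radial_ode M a rstar om m lam F u ->
  forall r, rplus M a < r -> Ccont u r.
Proof.
  intros Ht [u1 [u2 [Hd _]]]. apply (dstar_cont rstar _ u u1); auto.
  apply (tort_cont M a rstar Ht). apply Ht.
Qed.

Definition Gf M a om m (u : R -> Cx) r :=
  Cmul (Cpow_pos (r - rminus M a) (eta M a om m))
  (Cmul (Cpow_pos (r - rplus M a) (xi M a om m))
  (Cmul (Cexp (Cmul (Copp Ci) (Cscal r om)))
        (Cscal (/ sqrt (r ^ 2 + a ^ 2)) (u r)))).

Lemma Ccont_pow c z r : c < r -> Ccont (fun y => Cpow_pos (y - c) z) r.
Proof.
  intros H. unfold Cpow_pos. apply Ccont_exp. apply Ccont_scal. 2: apply Ccont_const.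
  apply cont_of_deriv. auto_derive. lra.
Qed.

Lemma G_cont M a om m u : 0 < M -> Rabs a < M -> (forall r, rplus M a < r -> Ccont u r) ->
  forall r, rplus M a < r -> Ccont (Gf M a om m u) r.
Proof.
  intros HM Ha Hu r Hr. destruct (kerr_facts M a HM Ha) as [h1 [h2 [h3 h4]]].
  unfold Gf. apply Ccont_mul. apply Ccont_pow; lra.
  apply Ccont_mul. apply Ccont_pow; lra.
  apply Ccont_mul. apply Ccont_exp. apply Ccont_mul. apply Ccont_const.
  apply Ccont_scal. apply continuity_pt_id. apply Ccont_const.
  apply Ccont_scal. 2: apply Hu; auto.
  apply cont_of_deriv. auto_derive.
  assert (0 < sqrt (r ^ 2 + a ^ 2)) by (apply sqrt_lt_R0; nra).
  replace (r * (r * 1) + a * (a * 1)) with (r ^ 2 + a ^ 2) by ring.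
  repeat split; try nra.
Qed.


Lemma exp_split x y : exp (x + y) = exp x * exp y.
Proof. apply exp_plus. Qed.

Lemma sqrt_ge_r r a : 0 < r -> r <= sqrt (r ^ 2 + a ^ 2).
Proof.
  intros Hr. rewrite <- (sqrt_pow2 r) at 1 by lra. apply sqrt_le_1_alt. nra.
Qed.

Lemma G_norm M a om m u r : 0 < r ->
  Cnorm (Gf M a om m u r) = exp (fst (eta M a om m) * ln (r - rminus M a)) *
    (exp (fst (xi M a om m) * ln (r - rplus M a)) * (exp (snd om * r) *
      (/ sqrt (r ^ 2 + a ^ 2) * Cnorm (u r)))) .
Proof.
  intros Hr.
  unfold Gf. rewrite !Cnorm_mul, !Cnorm_pow, Cnorm_exp, Cnorm_scal.
  rewrite Rabs_pos_eq. 2: { left; apply Rinv_0_lt_compat. generalize (sqrt_ge_r r a Hr); lra. }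
  replace (fst (Cmul (Copp Ci) (Cscal r om))) with (snd om * r). reflexivity.
  unfold Cmul, Copp, Ci, Cscal; simpl. ring.
Qed.

Lemma exp_ln_le1 p t : 0 <= p -> 0 < t <= 1 -> exp (p * ln t) <= 1.
Proof.
  intros Hp Ht. rewrite <- exp_0. apply exp_mono.
  assert (ln t <= 0). { rewrite <- ln_1. apply ln_le; lra. } nra.
Qed.

Lemma G_bound M a rstar om m u :
  0 < M -> Rabs a < M -> tortoise M a rstar ->
  (forall r, rplus M a < r -> Ccont u r) ->
  bc_horizon M a om m u -> bc_infinity M a rstar om u -> 0 < snd om ->
  exists CG, 0 <= CG /\ forall r, rplus M a < r ->
    Cnorm (Gf M a om m u r) <= CG * exp (5/4 * snd om * (r - rplus M a)).
Proof.
  intros HM Ha Ht Hu Hh Hi Hw.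
  destruct (kerr_facts M a HM Ha) as [h1 [h2 [h3 h4]]].
  set (rp := rplus M a) in *. set (rm := rminus M a) in *. set (w2 := snd om) in *.
  set (L := rp - rm).
  set (x1 := fst (xi M a om m)). set (e1 := fst (eta M a om m)).
  assert (Hx1 : 0 <= x1).
  { unfold x1. rewrite fst_xi. fold rp rm w2. apply Rmult_le_pos. 2: left; apply Rinv_0_lt_compat; lra.
    apply Rmult_le_pos; [|lra]. apply Rmult_le_pos; lra. }
  set (beta := w2 / 8).
  assert (Hbeta : 0 < beta) by (unfold beta; lra).
  destruct (pow_exp_bound e1 beta L Hbeta ltac:(unfold L; lra)) as [Ce [HCe HCe']].
  destruct (pow_exp_bound x1 beta 1 Hbeta ltac:(lra)) as [Cx [HCx HCx']].
  assert (Hsq : forall r, rp < r -> / sqrt (r ^ 2 + a ^ 2) <= / rp).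
  { intros r Hr. apply Rinv_le_contravar; auto. generalize (sqrt_ge_r r a ltac:(lra)); lra. }
  assert (Hsq0 : forall r, rp < r -> 0 <= / sqrt (r ^ 2 + a ^ 2)).
  { intros r Hr. left. apply Rinv_0_lt_compat. generalize (sqrt_ge_r r a ltac:(lra)); lra. }
  destruct Hh as [d [Hd [D [HD0 [HDd HDc]]]]].
  change (rplus M a) with rp in HD0, HDd, HDc.
  destruct (HDc O 1 ltac:(lra)) as [d1 [Hd1 Hc1]].
  set (dh := Rmin (Rmin d d1) 1).
  assert (Hdh : 0 < dh) by (unfold dh; repeat apply Rmin_glb_lt; lra).
  assert (Hdh1 : dh <= d) by (unfold dh; eapply Rle_trans; [apply Rmin_l|apply Rmin_l]).
  assert (Hdh2 : dh <= d1) by (unfold dh; eapply Rle_trans; [apply Rmin_l|apply Rmin_r]).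
  assert (Hdh3 : dh <= 1) by (unfold dh; apply Rmin_r).
  set (Ch := Ce * exp (beta * (rp + 1 - rm)) * exp (w2 * (rp + 1)) * / rp * (Cnorm (D O rp) + 1)).
  assert (HCh0 : 0 <= Ch).
  { unfold Ch. repeat apply Rmult_le_pos; try lra; try (left; apply exp_pos).
    left; apply Rinv_0_lt_compat; lra. generalize (Cnorm_ge0 (D O rp)); lra. }
  assert (Hhor : forall r, rp < r < rp + dh -> Cnorm (Gf M a om m u r) <= Ch).
  { intros r Hr.
    assert (Hur : Cnorm (u r) = exp (x1 * ln (r - rp)) * Cnorm (D O r)).
    { rewrite (HD0 r ltac:(lra)). rewrite Cnorm_mul, Cnorm_pow.
      replace (fst (Copp (xi M a om m))) with (- x1) by (unfold x1, Copp; simpl; ring).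
      rewrite <- Rmult_assoc, <- exp_plus. replace (x1 * ln (r - rp) + - x1 * ln (r - rp)) with 0 by ring.
      rewrite exp_0. ring. }
    assert (HDr : Cnorm (D O r) <= Cnorm (D O rp) + 1).
    { assert (h := Hc1 r ltac:(lra) ltac:(lra)). generalize (Cnorm_sub_le (D O r) (D O rp)). lra. }
    rewrite G_norm by lra. fold rp rm w2 x1 e1. rewrite Hur.
    assert (A1 : exp (e1 * ln (r - rm)) <= Ce * exp (beta * (rp + 1 - rm))).
    { eapply Rle_trans. apply HCe'. unfold L; lra. apply Rmult_le_compat_l; [lra|]. apply exp_mono.
      apply Rmult_le_compat_l; lra. }
    assert (A2 : exp (x1 * ln (r - rp)) <= 1) by (apply exp_ln_le1; lra).
    assert (A3 : exp (w2 * r) <= exp (w2 * (rp + 1))) by (apply exp_mono; apply Rmult_le_compat_l; lra).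
    assert (P1 := exp_pos (e1 * ln (r - rm))). assert (P2 := exp_pos (x1 * ln (r - rp))).
    assert (P3 := exp_pos (w2 * r)). assert (P4 := Hsq r ltac:(lra)). assert (P5 := Hsq0 r ltac:(lra)).
    assert (P6 := Cnorm_ge0 (D O r)).
    unfold Ch.
    assert (exp (x1 * ln (r - rp)) * (exp (w2 * r) * (/ sqrt (r ^ 2 + a ^ 2) * (exp (x1 * ln (r - rp)) * Cnorm (D O r))))
            <= 1 * (exp (w2 * (rp + 1)) * (/ rp * (1 * (Cnorm (D O rp) + 1))))).
    { apply Rmult_le_compat; [lra| repeat apply Rmult_le_pos; lra | lra |].
      apply Rmult_le_compat; [lra| repeat apply Rmult_le_pos; lra | lra |].
      apply Rmult_le_compat; [lra| repeat apply Rmult_le_pos; lra | lra |].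
      apply Rmult_le_compat; lra. }
    assert (0 <= exp (x1 * ln (r - rp)) * (exp (w2 * r) * (/ sqrt (r ^ 2 + a ^ 2) * (exp (x1 * ln (r - rp)) * Cnorm (D O r))))).
    { repeat apply Rmult_le_pos; lra. }
    replace (Ce * exp (beta * (rp + 1 - rm)) * exp (w2 * (rp + 1)) * / rp * (Cnorm (D O rp) + 1))
      with ((Ce * exp (beta * (rp + 1 - rm))) * (1 * (exp (w2 * (rp + 1)) * (/ rp * (1 * (Cnorm (D O rp) + 1)))))) by ring.
    apply Rmult_le_compat; try lra. }
  destruct (Hi) as [Cs HCs]. destruct (HCs O) as [K [X HKX]].
  change (rplus M a) with rp in HKX. change (snd om) with w2 in HKX.
  set (R0 := Rmax X rp + 1).
  assert (HR0 : rp + 1 <= R0 /\ X < R0).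
  { unfold R0. generalize (Rmax_l X rp) (Rmax_r X rp). lra. }
  set (Bu := exp (- w2 * rstar R0) * Cnorm (Cs O) + Rabs K).
  assert (Hfu : forall r, R0 <= r -> Cnorm (u r) <= Bu).
  { intros r Hr. assert (h := HKX r ltac:(lra) ltac:(lra)).
    eapply Rle_trans. apply (Cnorm_sub_le (u r) (Cmul (Cexp (Cmul Ci (Cscal (rstar r) om))) (Csum (fun i => Cscal (/ r ^ i) (Cs i)) 0))).
    rewrite Cnorm_mul, Cnorm_exp. simpl Csum. rewrite Cnorm_scal.
    replace (fst (Cmul Ci (Cscal (rstar r) om))) with (- w2 * rstar r) by (unfold Cmul, Ci, Cscal, w2; simpl; ring).
    rewrite Rinv_1, Rabs_R1, Rmult_1_l. simpl in h. rewrite Rinv_1 in h.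
    assert (Hst : rstar R0 <= rstar r).
    { destruct (Req_dec R0 r). subst; lra. left. destruct Ht as [_ [Hm _]]. change (rplus M a) with rp in Hm. apply Hm; lra. }
    assert (exp (- w2 * rstar r) <= exp (- w2 * rstar R0)) by (apply exp_mono; nra).
    assert (K * / r ^ 1 <= Rabs K).
    { simpl. rewrite Rmult_1_r. destruct (Rle_or_lt 0 K).
      - rewrite Rabs_pos_eq by auto. assert (0 < / r <= 1). { split. apply Rinv_0_lt_compat; lra. rewrite <- Rinv_1. apply Rinv_le_contravar; lra. } nra.
      - assert (K * / r < 0). { apply Rmult_neg_pos; auto. apply Rinv_0_lt_compat; lra. }
        generalize (Rabs_pos K); lra. }
    unfold Bu. simpl in H0. generalize (Cnorm_ge0 (Cs O)) (exp_pos (- w2 * rstar r)). nra. }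
  set (Cf := Ce * Cx * exp (beta * L) * exp (w2 * rp) * / rp * Bu).
  assert (HCf0 : 0 <= Cf).
  { unfold Cf. repeat apply Rmult_le_pos; try lra; try (left; apply exp_pos).
    left; apply Rinv_0_lt_compat; lra. unfold Bu. generalize (Cnorm_ge0 (Cs O)) (Rabs_pos K) (exp_pos (- w2 * rstar R0)). nra. }
  assert (Hfar : forall r, R0 <= r -> Cnorm (Gf M a om m u r) <= Cf * exp (5/4 * w2 * (r - rp))).
  { intros r Hr. rewrite G_norm by lra. fold rp rm w2 x1 e1.
    assert (A1 : exp (e1 * ln (r - rm)) <= Ce * exp (beta * (r - rm))) by (apply HCe'; unfold L; lra).
    assert (A2 : exp (x1 * ln (r - rp)) <= Cx * exp (beta * (r - rp))) by (apply HCx'; lra).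
    assert (P1 := exp_pos (e1 * ln (r - rm))). assert (P2 := exp_pos (x1 * ln (r - rp))).
    assert (P3 := exp_pos (w2 * r)). assert (P4 := Hsq r ltac:(lra)). assert (P5 := Hsq0 r ltac:(lra)).
    assert (P6 := Cnorm_ge0 (u r)). assert (P7 := Hfu r Hr).
    assert (E : Cf * exp (5 / 4 * w2 * (r - rp)) =
       (Ce * exp (beta * (r - rm))) * ((Cx * exp (beta * (r - rp))) * (exp (w2 * r) * (/ rp * Bu)))).
    { unfold Cf. replace (Ce * exp (beta * (r - rm)) * (Cx * exp (beta * (r - rp)) * (exp (w2 * r) * (/ rp * Bu))))
        with (Ce * Cx * / rp * Bu * (exp (beta * (r - rm)) * exp (beta * (r - rp)) * exp (w2 * r))) by ring.
      rewrite <- !exp_plus.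
      replace (beta * (r - rm) + beta * (r - rp) + w2 * r) with (beta * L + w2 * rp + 5 / 4 * w2 * (r - rp))
        by (unfold beta, L; field).
      rewrite !exp_plus. ring. }
    rewrite E.
    apply Rmult_le_compat; try lra. repeat apply Rmult_le_pos; lra.
    apply Rmult_le_compat; try lra. repeat apply Rmult_le_pos; lra.
    apply Rmult_le_compat; try lra. repeat apply Rmult_le_pos; lra.
    apply Rmult_le_compat; try lra. }
  assert (HR0' : rp + dh <= R0) by lra.
  destruct (continuity_ab_maj (fun y => Cnorm (Gf M a om m u y)) (rp + dh) R0 HR0') as [Mx [HMx HMx']].
  { intros c Hc. apply Ccont_norm. apply G_cont; auto. fold rp. lra. }
  set (Cm := Cnorm (Gf M a om m u Mx)).
  assert (HCm0 : 0 <= Cm) by apply Cnorm_ge0.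
  exists (Ch + Cm + Cf). split. lra.
  intros r Hr.
  assert (He : 1 <= exp (5 / 4 * w2 * (r - rp))).
  { rewrite <- exp_0. apply exp_mono. assert (0 <= w2 * (r - rp)) by nra. lra. }
  destruct (Rlt_or_le r (rp + dh)).
  { assert (h := Hhor r ltac:(lra)). nra. }
  destruct (Rle_or_lt r R0).
  { assert (h := HMx r ltac:(lra)). simpl in h. fold Cm in h. nra. }
  assert (h := Hfar r ltac:(lra)). nra.
Qed.


Definition kf M a x r := 2 * (x - rminus M a) * (r - rminus M a) / (rplus M a - rminus M a).
Definition kd M a r := 2 * (r - rminus M a) / (rplus M a - rminus M a).
Definition Phi M a om (K : R -> Cx) x r := Cmul (Cexp (Cscal (kf M a x r) (Cmul Ci om))) (K r).
Definition Kstep M a om (K : R -> Cx) r := Cscal (kd M a r) (Cmul (Cmul Ci om) (K r)).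

Lemma whiting_int_eq M a om m u x :
  whiting_integrand M a om m u x = Phi M a om (Gf M a om m u) x.
Proof. reflexivity. Qed.

Lemma Cderiv_const z x : Cderiv_at (fun _ => z) x (0, 0).
Proof. split; apply derivable_pt_lim_const. Qed.

Lemma Phi_deriv M a om K x r : rplus M a - rminus M a <> 0 ->
  Cderiv_at (fun t => Phi M a om K t r) x (Phi M a om (Kstep M a om K) x r).
Proof.
  intros HL. unfold Phi.
  eapply Cderiv_ext. 2: { replace (Cmul (Cexp (Cscal (kf M a x r) (Cmul Ci om))) (Kstep M a om K r)) with
     (Cadd (Cmul (Cscal (kd M a r) (Cmul (Cmul Ci om) (Cexp (Cscal (kf M a x r) (Cmul Ci om))))) (K r))
           (Cmul (Cexp (Cscal (kf M a x r) (Cmul Ci om))) (0, 0))).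
    apply (Cderiv_mul (fun t => Cexp (Cscal (kf M a t r) (Cmul Ci om))) (fun _ => K r)).
    apply (Cderiv_expo (fun t => kf M a t r)).
    - unfold kf, kd. apply is_derive_Reals. auto_derive. auto. field. auto.
    - apply Cderiv_const.
    - unfold Kstep. apply Cpair_eq; unfold Cadd, Cmul, Cscal; cbn [fst snd]; ring. }
  intros; reflexivity.
Qed.

Lemma Phi_norm M a om K x r :
  Cnorm (Phi M a om K x r) = exp (- snd om * kf M a x r) * Cnorm (K r).
Proof.
  unfold Phi. rewrite Cnorm_mul, Cnorm_exp. f_equal. f_equal.
  unfold Cscal, Cmul, Ci; simpl. ring.
Qed.

Lemma Kstep_norm M a om K r :
  Cnorm (Kstep M a om K r) = Rabs (kd M a r) * (Cnorm om * Cnorm (K r)).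
Proof.
  unfold Kstep. rewrite Cnorm_scal, !Cnorm_mul. f_equal. f_equal.
  replace (Cnorm Ci) with 1. ring. unfold Cnorm, Ci; simpl. replace (0*(0*1) + 1*(1*1)) with 1 by ring.
  symmetry; apply sqrt_1.
Qed.

Lemma Phi_cont M a om K x r : Ccont K r -> Ccont (fun r => Phi M a om K x r) r.
Proof.
  intros HK. unfold Phi. apply Ccont_mul; auto. apply Ccont_exp. apply Ccont_scal. 2: apply Ccont_const.
  unfold kf. apply cont_of_deriv. auto_derive. auto.
Qed.

Lemma kd_cont M a r : continuity_pt (kd M a) r.
Proof. unfold kd. apply cont_of_deriv. auto_derive. auto. Qed.

Lemma Kstep_cont M a om K r : Ccont K r -> Ccont (Kstep M a om K) r.
Proof. intros HK. unfold Kstep. apply Ccont_scal. apply kd_cont. apply Ccont_mul; auto. apply Ccont_const. Qed.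

Lemma Phi_decay M a om K A t r : 0 < M -> Rabs a < M -> 0 < snd om ->
  rplus M a < t -> rplus M a < r -> 0 <= A ->
  Cnorm (K r) <= A * (1 + kd M a r) ^ 2 * exp (5/4 * snd om * (r - rplus M a)) ->
  Cnorm (Phi M a om K t r) <=
    A * (3 + 8 / ((rplus M a - rminus M a) * snd om)) ^ 2 *
    exp (- 2 * snd om * (t - rminus M a)) * exp (- (snd om / 4) * (r - rplus M a)).
Proof.
  intros HM Ha Hw Ht Hr HA HK.
  destruct (kerr_facts M a HM Ha) as [h1 [h2 [h3 h4]]].
  rewrite Phi_norm.
  set (rp := rplus M a) in *. set (rm := rminus M a) in *. set (w2 := snd om) in *.
  set (L := rp - rm). set (tau := r - rp).
  assert (HL : 0 < L) by (unfold L; lra).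
  assert (Htau : 0 <= tau) by (unfold tau; lra).
  assert (Hkf : 2 * (t - rm) + 2 * tau <= kf M a t r).
  { unfold kf. fold rp rm. fold L. apply (Rmult_le_reg_r L); auto.
    unfold Rdiv. rewrite Rmult_assoc, Rinv_l, Rmult_1_r by lra.
    unfold tau, L. assert (0 <= (r - rp) * (t - rp)) by (apply Rmult_le_pos; lra). nra. }
  assert (Hkd : 1 + kd M a r = 3 + 2 * tau / L).
  { unfold kd. fold rp rm. fold L. unfold tau. field_simplify_eq; [|lra]. unfold L. ring. }
  rewrite Hkd in HK. change (r - rp) with tau in HK.
  assert (E1 : exp (- w2 * kf M a t r) <= exp (- 2 * w2 * (t - rm)) * exp (- 2 * w2 * tau)).
  { rewrite <- exp_plus. apply exp_mono. nra. }
  assert (B1 : (3 + 2 * tau / L) * exp (- (w2 / 4) * tau) <= 3 + 8 / (L * w2)).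
  { assert (h := lin_exp_bound (w2 / 4) tau ltac:(lra) Htau).
    assert (exp (- (w2 / 4) * tau) <= 1). { rewrite <- exp_0. apply exp_mono. nra. }
    assert (2 * tau / L * exp (- (w2 / 4) * tau) <= 8 / (L * w2)).
    { replace (2 * tau / L * exp (- (w2 / 4) * tau)) with (2 / L * (tau * exp (- (w2 / 4) * tau))) by (field; lra).
      replace (8 / (L * w2)) with (2 / L * / (w2 / 4)) by (field; lra).
      apply Rmult_le_compat_l; auto. apply Rdiv_le_0_compat; lra. }
    nra. }
  assert (B1p : 0 <= (3 + 2 * tau / L) * exp (- (w2 / 4) * tau)).
  { apply Rmult_le_pos. assert (0 <= tau / L) by (apply Rdiv_le_0_compat; lra). lra. left; apply exp_pos. }
  assert (EE : exp (- 2 * w2 * tau) * ((3 + 2 * tau / L) ^ 2 * exp (5 / 4 * w2 * tau)) =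
               ((3 + 2 * tau / L) * exp (- (w2 / 4) * tau)) ^ 2 * exp (- (w2 / 4) * tau)).
  { assert (X : exp (- 2 * w2 * tau) * exp (5/4*w2*tau) = exp (-(w2/4)*tau) * exp (-(w2/4)*tau) * exp (-(w2/4)*tau)).
    { rewrite <- !exp_plus. f_equal. field. }
    replace (exp (- 2 * w2 * tau) * ((3 + 2 * tau / L) ^ 2 * exp (5 / 4 * w2 * tau)))
      with ((3 + 2 * tau / L) ^ 2 * (exp (- 2 * w2 * tau) * exp (5 / 4 * w2 * tau))) by ring.
    rewrite X. ring. }
  assert (Sq : ((3 + 2 * tau / L) * exp (- (w2 / 4) * tau)) ^ 2 <= (3 + 8 / (L * w2)) ^ 2).
  { simpl. rewrite !Rmult_1_r. apply Rmult_le_compat; lra. }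
  assert (P1 := exp_pos (- 2 * w2 * (t - rm))). assert (P2 := exp_pos (- (w2 / 4) * tau)).
  assert (P3 := exp_pos (- 2 * w2 * tau)). assert (P4 := Cnorm_ge0 (K r)).
  assert (P5 := exp_pos (- w2 * kf M a t r)).
  eapply Rle_trans. apply Rmult_le_compat; [lra|apply P4|apply E1|apply HK].
  replace (exp (- 2 * w2 * (t - rm)) * exp (- 2 * w2 * tau) * (A * (3 + 2 * tau / L) ^ 2 * exp (5 / 4 * w2 * tau)))
    with (A * exp (- 2 * w2 * (t - rm)) * (exp (- 2 * w2 * tau) * ((3 + 2 * tau / L) ^ 2 * exp (5 / 4 * w2 * tau)))) by ring.
  rewrite EE.
  replace (A * (3 + 8 / (L * w2)) ^ 2 * exp (- 2 * w2 * (t - rm)) * exp (- (w2 / 4) * tau))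
    with (A * exp (- 2 * w2 * (t - rm)) * ((3 + 8 / (L * w2)) ^ 2 * exp (- (w2 / 4) * tau))) by ring.
  apply Rmult_le_compat_l. apply Rmult_le_pos; lra.
  apply Rmult_le_compat_r; lra.
Qed.


Definition Lam M a (om : Cx) := (3 + 8 / ((rplus M a - rminus M a) * snd om)) ^ 2.

Lemma Phi_int M a om K A t : 0 < M -> Rabs a < M -> 0 < snd om -> 0 <= A ->
  (forall r, rplus M a < r -> Ccont K r) ->
  (forall r, rplus M a < r -> Cnorm (K r) <= A * (1 + kd M a r) ^ 2 * exp (5/4 * snd om * (r - rplus M a))) ->
  rplus M a < t ->
  improper_integral (fun r => Phi M a om K t r) (rplus M a) (CimpInt (fun r => Phi M a om K t r) (rplus M a)) /\
  Cnorm (CimpInt (fun r => Phi M a om K t r) (rplus M a)) <=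
    2 * (A * Lam M a om * exp (- 2 * snd om * (t - rminus M a)) / (snd om / 4)).
Proof.
  intros HM Ha Hw HA Hc Hb Ht.
  set (C := A * Lam M a om * exp (- 2 * snd om * (t - rminus M a))).
  assert (Hmu : 0 < snd om / 4) by lra.
  assert (Hbd : forall r, rplus M a < r -> Cnorm (Phi M a om K t r) <= C * exp (- (snd om / 4) * (r - rplus M a))).
  { intros r Hr. unfold C, Lam. apply Phi_decay; auto. }
  assert (Hb1 : forall r, rplus M a < r -> Rabs (fst (Phi M a om K t r)) <= C * exp (- (snd om / 4) * (r - rplus M a))).
  { intros r Hr. eapply Rle_trans. apply Cnorm_fst. auto. }
  assert (Hb2 : forall r, rplus M a < r -> Rabs (snd (Phi M a om K t r)) <= C * exp (- (snd om / 4) * (r - rplus M a))).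
  { intros r Hr. eapply Rle_trans. apply Cnorm_snd. auto. }
  assert (Hc1 : forall r, rplus M a < r -> continuity_pt (fun r => fst (Phi M a om K t r)) r).
  { intros r Hr. apply (Phi_cont M a om K t r (Hc r Hr)). }
  assert (Hc2 : forall r, rplus M a < r -> continuity_pt (fun r => snd (Phi M a om K t r)) r).
  { intros r Hr. apply (Phi_cont M a om K t r (Hc r Hr)). }
  destruct (imp_exists _ _ _ _ Hmu Hb1 Hc1) as [v1 Hv1].
  destruct (imp_exists _ _ _ _ Hmu Hb2 Hc2) as [v2 Hv2].
  assert (Hspec : improper_integral (fun r => Phi M a om K t r) (rplus M a) (CimpInt (fun r => Phi M a om K t r) (rplus M a))).
  { unfold CimpInt. apply epsilon_spec. exists (v1, v2). split; auto. }
  split; auto.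
  destruct Hspec as [S1 S2].
  assert (h1 := imp_value_bd _ _ _ _ Hmu Hb1 _ S1).
  assert (h2 := imp_value_bd _ _ _ _ Hmu Hb2 _ S2).
  eapply Rle_trans. apply Cnorm_le_sum. lra.
Qed.

Lemma K_bounds M a om K CG : 0 < M -> Rabs a < M -> 0 <= CG ->
  (forall r, rplus M a < r -> Cnorm (K r) <= CG * exp (5/4 * snd om * (r - rplus M a))) ->
  forall r, rplus M a < r ->
  Cnorm (K r) <= CG * (1 + Cnorm om) ^ 2 * (1 + kd M a r) ^ 2 * exp (5/4 * snd om * (r - rplus M a)) /\
  Cnorm (Kstep M a om K r) <= CG * (1 + Cnorm om) ^ 2 * (1 + kd M a r) ^ 2 * exp (5/4 * snd om * (r - rplus M a)) /\
  Cnorm (Kstep M a om (Kstep M a om K) r) <= CG * (1 + Cnorm om) ^ 2 * (1 + kd M a r) ^ 2 * exp (5/4 * snd om * (r - rplus M a)).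
Proof.
  intros HM Ha HCG HK r Hr.
  destruct (kerr_facts M a HM Ha) as [h1 [h2 [h3 h4]]].
  assert (Hkd : 0 <= kd M a r). { unfold kd. apply Rdiv_le_0_compat; lra. }
  assert (Ho := Cnorm_ge0 om).
  assert (HKr := HK r Hr). assert (HKp := Cnorm_ge0 (K r)).
  assert (He := exp_pos (5/4 * snd om * (r - rplus M a))).
  set (E := exp (5/4 * snd om * (r - rplus M a))) in *.
  set (k := kd M a r) in *. set (o := Cnorm om) in *.
  assert (Hk2 : 1 <= (1 + k)^2) by nra. assert (Ho2 : 1 <= (1 + o)^2) by nra.
  assert (X : CG * E <= CG * (1 + o) ^ 2 * (1 + k) ^ 2 * E).
  { assert (0 <= CG * E) by nra. assert (1 <= (1 + o) ^ 2 * (1 + k) ^ 2) by nra. nra. }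
  repeat split.
  - lra.
  - rewrite Kstep_norm. rewrite Rabs_pos_eq by auto. fold k o.
    assert (k * (o * Cnorm (K r)) <= (1 + k) * ((1 + o) * (CG * E))).
    { apply Rmult_le_compat; try nra. }
    assert ((1 + k) * ((1 + o) * (CG * E)) <= CG * (1 + o) ^ 2 * (1 + k) ^ 2 * E).
    { assert (0 <= CG * E) by nra. 
      assert ((1 + k) * (1 + o) <= (1 + o) ^ 2 * (1 + k) ^ 2) by nra. nra. }
    lra.
  - rewrite !Kstep_norm. rewrite Rabs_pos_eq by auto. fold k o.
    assert (k * (o * (k * (o * Cnorm (K r)))) <= (1 + k) * ((1 + o) * ((1 + k) * ((1 + o) * (CG * E))))).
    { assert (f1 : o * Cnorm (K r) <= (1 + o) * (CG * E)) by (apply Rmult_le_compat; lra).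
      assert (f0 : 0 <= o * Cnorm (K r)) by nra.
      assert (f2 : k * (o * Cnorm (K r)) <= (1 + k) * ((1 + o) * (CG * E))) by (apply Rmult_le_compat; lra).
      assert (f3 : o * (k * (o * Cnorm (K r))) <= (1 + o) * ((1 + k) * ((1 + o) * (CG * E)))) by (apply Rmult_le_compat; nra).
      apply Rmult_le_compat; [lra| apply Rmult_le_pos; [lra| apply Rmult_le_pos; [lra|exact f0]] | lra | exact f3]. }
    assert ((1 + k) * ((1 + o) * ((1 + k) * ((1 + o) * (CG * E)))) = CG * (1 + o) ^ 2 * (1 + k) ^ 2 * E) by ring.
    lra.
Qed.

Lemma I_deriv M a om K A x : 0 < M -> Rabs a < M -> 0 < snd om -> 0 <= A ->
  (forall r, rplus M a < r -> Ccont K r) ->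
  (forall r, rplus M a < r -> Cnorm (K r) <= A * (1 + kd M a r) ^ 2 * exp (5/4 * snd om * (r - rplus M a))) ->
  (forall r, rplus M a < r -> Cnorm (Kstep M a om K r) <= A * (1 + kd M a r) ^ 2 * exp (5/4 * snd om * (r - rplus M a))) ->
  (forall r, rplus M a < r -> Cnorm (Kstep M a om (Kstep M a om K) r) <= A * (1 + kd M a r) ^ 2 * exp (5/4 * snd om * (r - rplus M a))) ->
  rplus M a < x ->
  Cderiv_at (fun t => CimpInt (fun r => Phi M a om K t r) (rplus M a)) x
            (CimpInt (fun r => Phi M a om (Kstep M a om K) x r) (rplus M a)).
Proof.
  intros HM Ha Hw HA Hc B0 B1 B2 Hx.
  destruct (kerr_facts M a HM Ha) as [h1 [h2 [h3 h4]]].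
  assert (HL : rplus M a - rminus M a <> 0) by lra.
  assert (Hc1 : forall r, rplus M a < r -> Ccont (Kstep M a om K) r) by (intros; apply Kstep_cont; auto).
  assert (Hmu : 0 < snd om / 4) by lra.
  assert (HLam : 0 <= Lam M a om) by (unfold Lam; apply pow2_ge_0).
  assert (Bd2 : forall t r, rplus M a < t -> rplus M a < r ->
     Cnorm (Phi M a om (Kstep M a om (Kstep M a om K)) t r) <= A * Lam M a om * exp (- (snd om / 4) * (r - rplus M a))).
  { intros t r Ht Hr. eapply Rle_trans. apply (Phi_decay M a om _ A t r HM Ha Hw Ht Hr HA (B2 r Hr)).
    assert (exp (- 2 * snd om * (t - rminus M a)) <= 1).
    { rewrite <- exp_0. apply exp_mono. nra. }
    assert (P := exp_pos (- (snd om / 4) * (r - rplus M a))).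
    change ((3 + 8 / ((rplus M a - rminus M a) * snd om)) ^ 2) with (Lam M a om).
    assert (0 <= A * Lam M a om) by (apply Rmult_le_pos; auto).
    apply Rmult_le_compat_r. lra. 
    assert (A * Lam M a om * exp (- 2 * snd om * (t - rminus M a)) <= A * Lam M a om * 1) by (apply Rmult_le_compat_l; lra).
    lra. }
  assert (Hint := fun t Ht => proj1 (Phi_int M a om K A t HM Ha Hw HA Hc B0 Ht)).
  assert (HJ := proj1 (Phi_int M a om (Kstep M a om K) A x HM Ha Hw HA Hc1 B1 Hx)).
  split.
  - apply (imp_deriv (rplus M a) (rplus M a) (A * Lam M a om) (snd om / 4)
      (fun t r => fst (Phi M a om K t r)) (fun t r => fst (Phi M a om (Kstep M a om K) t r))
      (fun t r => fst (Phi M a om (Kstep M a om (Kstep M a om K)) t r))); auto.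
    + intros t r Ht Hr. apply (Phi_deriv M a om K t r HL).
    + intros t r Ht Hr. apply (Phi_deriv M a om (Kstep M a om K) t r HL).
    + intros t r Ht Hr. eapply Rle_trans. apply Cnorm_fst. auto.
    + intros t Ht. apply (Hint t Ht).
    + apply HJ.
  - apply (imp_deriv (rplus M a) (rplus M a) (A * Lam M a om) (snd om / 4)
      (fun t r => snd (Phi M a om K t r)) (fun t r => snd (Phi M a om (Kstep M a om K) t r))
      (fun t r => snd (Phi M a om (Kstep M a om (Kstep M a om K)) t r))); auto.
    + intros t r Ht Hr. apply (Phi_deriv M a om K t r HL).
    + intros t r Ht Hr. apply (Phi_deriv M a om (Kstep M a om K) t r HL).
    + intros t r Ht Hr. eapply Rle_trans. apply Cnorm_snd. auto.
    + intros t Ht. apply (Hint t Ht).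
    + apply HJ.
Qed.


Lemma dpl_is_lim g x l : derivable_pt_lim g x l -> is_lim (fun y => (g y - g x) / (y - x)) x l.
Proof.
  intros H. apply is_lim_spec. intros eps. destruct (H eps (cond_pos eps)) as [d Hd].
  exists d. intros y Hy Hyx. change R in y. specialize (Hd (y - x)).
  replace (x + (y - x)) with y in Hd by (simpl; ring). apply Hd. intro; apply Hyx; lra.
  change (Rabs (y - x) < d). apply Hy.
Qed.

Lemma ratio_lim g s x l ls : derivable_pt_lim g x l -> derivable_pt_lim s x ls -> ls <> 0 ->
  forall eps, 0 < eps -> exists d, 0 < d /\ forall y, y <> x -> Rabs (y - x) < d -> s y <> s x ->
    Rabs ((g y - g x) / (s y - s x) - l / ls) < eps.
Proof.
  intros Hg Hs Hls eps Heps.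
  assert (H := is_lim_div _ _ x l ls (dpl_is_lim g x l Hg) (dpl_is_lim s x ls Hs)).
  assert (H' : is_lim (fun y => (g y - g x) / (y - x) / ((s y - s x) / (y - x))) x (l / ls)).
  { replace (Finite (l / ls)) with (Rbar_div l ls). apply H.
    intro h; apply Hls; injection h; auto. simpl. auto. simpl. reflexivity. }
  apply is_lim_spec in H'. destruct (H' (mkposreal eps Heps)) as [d Hd].
  exists d. split. apply cond_pos. intros y Hy Hyd Hsy.
  assert (E : (g y - g x) / (s y - s x) = (g y - g x) / (y - x) / ((s y - s x) / (y - x))).
  { field. split; intro; apply Hsy || apply Hy; lra. }
  rewrite E. apply (Hd y); auto.
Qed.

Lemma dstar_of_deriv M a rstar (f f' : R -> Cx) : 0 < M -> Rabs a < M -> tortoise M a rstar ->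
  (forall x, rplus M a < x -> Cderiv_at f x (f' x)) ->
  dstar rstar (rplus M a) f (fun x => Cscal (Delta M a x / (x ^ 2 + a ^ 2)) (f' x)).
Proof.
  intros HM Ha Ht Hf x Hx eps Heps.
  destruct Ht as [Hd [Hm _]].
  assert (HD := Delta_pos M a x HM Ha Hx).
  assert (Hxa : 0 < x ^ 2 + a ^ 2).
  { destruct (kerr_facts M a HM Ha) as [h1 _]. nra. }
  assert (Hls : (x ^ 2 + a ^ 2) / Delta M a x <> 0).
  { apply Rgt_not_eq. apply Rdiv_lt_0_compat; auto. }
  destruct (Hf x Hx) as [F1 F2].
  destruct (ratio_lim _ _ x _ _ F1 (Hd x Hx) Hls (eps/2) ltac:(lra)) as [d1 [Hd1 H1]].
  destruct (ratio_lim _ _ x _ _ F2 (Hd x Hx) Hls (eps/2) ltac:(lra)) as [d2 [Hd2 H2]].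
  exists (Rmin d1 d2). split. apply Rmin_glb_lt; auto.
  intros y Hy Hyx Hyd.
  assert (m1 := Rmin_l d1 d2). assert (m2 := Rmin_r d1 d2).
  assert (Hs : rstar y <> rstar x).
  { destruct (Rtotal_order y x) as [h|[h|h]]. assert (h2 := Hm y x Hy h); lra. contradiction.
    assert (h2 := Hm x y Hx h); lra. }
  eapply Rle_lt_trans. apply Cnorm_le_sum.
  unfold Csub, Cadd, Copp, Cscal; cbn [fst snd].
  assert (E1 : / (rstar y - rstar x) * (fst (f y) + - fst (f x)) + - (Delta M a x / (x ^ 2 + a ^ 2) * fst (f' x))
           = (fst (f y) - fst (f x)) / (rstar y - rstar x) - fst (f' x) / ((x ^ 2 + a ^ 2) / Delta M a x)).
  { field. repeat split; lra. }
  assert (E2 : / (rstar y - rstar x) * (snd (f y) + - snd (f x)) + - (Delta M a x / (x ^ 2 + a ^ 2) * snd (f' x))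
           = (snd (f y) - snd (f x)) / (rstar y - rstar x) - snd (f' x) / ((x ^ 2 + a ^ 2) / Delta M a x)).
  { field. repeat split; lra. }
  rewrite E1, E2.
  assert (h1 := H1 y Hyx ltac:(lra) Hs). assert (h2 := H2 y Hyx ltac:(lra) Hs). lra.
Qed.


Definition cPc M (om : Cx) := Cscal (-2 * M) (Cmul Ci om).
Definition cEc (om : Cx) := Cmul (Copp Ci) om.
Definition Pf M a om x := Cexp (Cscal (ln (x - rplus M a)) (cPc M om)).
Definition Ef (om : Cx) x := Cexp (Cscal x (cEc om)).
Definition Wd M a om (I I1 : R -> Cx) x :=
  Cadd (Cscal (x / sqrt (x ^ 2 + a ^ 2)) (Cmul (Pf M a om x) (Cmul (Ef om x) (I x))))
       (Cscal (sqrt (x ^ 2 + a ^ 2))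
          (Cadd (Cmul (Cscal (/ (x - rplus M a)) (Cmul (cPc M om) (Pf M a om x))) (Cmul (Ef om x) (I x)))
                (Cmul (Pf M a om x) (Cadd (Cmul (Cscal 1 (Cmul (cEc om) (Ef om x))) (I x)) (Cmul (Ef om x) (I1 x)))))).

Lemma W_eq M a om m u x : whiting M a om m u x =
  Cscal (sqrt (x ^ 2 + a ^ 2)) (Cmul (Pf M a om x) (Cmul (Ef om x)
     (CimpInt (fun r => Phi M a om (Gf M a om m u) x r) (rplus M a)))).
Proof.
  unfold whiting. replace (Cmul (Copp Ci) (Cscal x om)) with (Cscal x (cEc om)). reflexivity.
  unfold cEc. apply Cpair_eq; unfold Cmul, Copp, Ci, Cscal; simpl; ring.
Qed.

Lemma W_deriv M a om (I I1 : R -> Cx) x : 0 < x -> rplus M a < x -> Cderiv_at I x (I1 x) ->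
  Cderiv_at (fun y => Cscal (sqrt (y ^ 2 + a ^ 2)) (Cmul (Pf M a om y) (Cmul (Ef om y) (I y)))) x
    (Wd M a om I I1 x).
Proof.
  intros Hx' Hx HI. assert (Hx0 : 0 < x ^ 2 + a ^ 2) by nra.
  assert (Hs : 0 < sqrt (x ^ 2 + a ^ 2)) by (apply sqrt_lt_R0; auto).
  unfold Wd.
  apply (Cderiv_scal (fun y => sqrt (y ^ 2 + a ^ 2)) (fun y => Cmul (Pf M a om y) (Cmul (Ef om y) (I y)))).
  - apply is_derive_Reals. auto_derive.
    replace (x * (x * 1) + a * (a * 1)) with (x ^ 2 + a ^ 2) by ring. auto.
    replace (x * (x * 1) + a * (a * 1)) with (x ^ 2 + a ^ 2) by ring. field. lra.
  - apply (Cderiv_mul (Pf M a om) (fun y => Cmul (Ef om y) (I y))).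
    + unfold Pf. apply (Cderiv_expo (fun y => ln (y - rplus M a))). apply is_derive_Reals. auto_derive. lra. field. lra.
    + apply (Cderiv_mul (Ef om) I); auto. unfold Ef. apply (Cderiv_expo (fun y => y)). apply derivable_pt_lim_id.
Qed.

Lemma Pf_norm M a om x : Cnorm (Pf M a om x) = Rpower (x - rplus M a) (2 * M * snd om).
Proof.
  unfold Pf, Rpower. rewrite Cnorm_exp. f_equal. unfold cPc, Cscal, Cmul, Ci; simpl. ring.
Qed.
Lemma Ef_norm om x : Cnorm (Ef om x) = exp (snd om * x).
Proof. unfold Ef. rewrite Cnorm_exp. f_equal. unfold cEc, Cscal, Cmul, Copp, Ci; simpl. ring. Qed.

Lemma Wd_norm M a om I I1 x : rplus M a < x ->
  Cnorm (Wd M a om I I1 x) <= Cnorm (Pf M a om x) * Cnorm (Ef om x) *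
    (Rabs (x / sqrt (x ^ 2 + a ^ 2)) * Cnorm (I x) + sqrt (x ^ 2 + a ^ 2) *
      (/ (x - rplus M a) * Cnorm (cPc M om) * Cnorm (I x) + Cnorm (cEc om) * Cnorm (I x) + Cnorm (I1 x))).
Proof.
  intros Hx. unfold Wd.
  assert (Hq : 0 < / (x - rplus M a)) by (apply Rinv_0_lt_compat; lra).
  eapply Rle_trans. apply Cnorm_add. rewrite !Cnorm_scal, !Cnorm_mul.
  rewrite (Rabs_pos_eq (sqrt _)) by apply sqrt_pos.
  assert (h := Cnorm_add (Cmul (Cscal (/ (x - rplus M a)) (Cmul (cPc M om) (Pf M a om x))) (Cmul (Ef om x) (I x)))
          (Cmul (Pf M a om x) (Cadd (Cmul (Cscal 1 (Cmul (cEc om) (Ef om x))) (I x)) (Cmul (Ef om x) (I1 x))))).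
  rewrite !Cnorm_mul, !Cnorm_scal, !Cnorm_mul in h.
  assert (h2 := Cnorm_add (Cmul (Cscal 1 (Cmul (cEc om) (Ef om x))) (I x)) (Cmul (Ef om x) (I1 x))).
  rewrite !Cnorm_mul, !Cnorm_scal, !Cnorm_mul in h2.
  rewrite Rabs_R1, (Rabs_pos_eq (/ _)) in * by lra.
  assert (P1 := Cnorm_ge0 (Pf M a om x)). assert (P2 := Cnorm_ge0 (Ef om x)).
  assert (P3 := Cnorm_ge0 (I x)). assert (P4 := Cnorm_ge0 (I1 x)).
  assert (P5 := Cnorm_ge0 (cPc M om)). assert (P6 := Cnorm_ge0 (cEc om)).
  assert (P7 := sqrt_pos (x ^ 2 + a ^ 2)).
  set (S := sqrt (x ^ 2 + a ^ 2)) in *.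
  set (nP := Cnorm (Pf M a om x)) in *. set (nE := Cnorm (Ef om x)) in *.
  set (nI := Cnorm (I x)) in *. set (nI1 := Cnorm (I1 x)) in *.
  set (nc := Cnorm (cPc M om)) in *. set (ne := Cnorm (cEc om)) in *.
  set (q := / (x - rplus M a)) in *.
  set (T := Cnorm (Cadd (Cmul (Cscal q (Cmul (cPc M om) (Pf M a om x))) (Cmul (Ef om x) (I x)))
                 (Cmul (Pf M a om x) (Cadd (Cmul (Cscal 1 (Cmul (cEc om) (Ef om x))) (I x)) (Cmul (Ef om x) (I1 x)))))) in *.
  set (T2 := Cnorm (Cadd (Cmul (Cscal 1 (Cmul (cEc om) (Ef om x))) (I x)) (Cmul (Ef om x) (I1 x)))) in *.
  assert (T <= nP * nE * (q * nc * nI + ne * nI + nI1)).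
  { assert (nP * T2 <= nP * (1 * (ne * nE) * nI + nE * nI1)) by (apply Rmult_le_compat_l; lra). nra. }
  assert (S * T <= S * (nP * nE * (q * nc * nI + ne * nI + nI1))) by (apply Rmult_le_compat_l; lra).
  nra.
Qed.


Lemma mono4 x1 x2 y1 y2 : 0 <= x1 <= x2 -> 0 <= y1 <= y2 -> x1 * y1 <= x2 * y2.
Proof. intros. apply Rmult_le_compat; lra. Qed.

Lemma ineq_h D al s q c ee J0 J1 BI S1 Rp PE :
  0 <= D <= 1 -> 0 <= D * q <= Rp -> 0 <= q -> 0 <= al <= 1 -> 0 <= s <= S1 -> 0 <= c -> 0 <= ee ->
  0 <= J0 <= BI -> 0 <= J1 <= BI -> 0 <= PE ->
  D * (PE * (al * J0 + s * (q * c * J0 + ee * J0 + J1))) <= PE * (BI + S1 * (c * BI * Rp + ee * BI + BI)).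
Proof.
  intros HD HDq Hq Hal Hs Hc He HI HI1 HPE.
  assert (t1 : D * (al * J0) <= BI).
  { assert (al * J0 <= 1 * BI) by (apply mono4; lra). assert (0 <= al * J0) by nra.
    assert (D * (al * J0) <= 1 * BI) by (apply mono4; lra). lra. }
  assert (t2 : D * (s * (q * c * J0)) <= S1 * (c * BI * Rp)).
  { replace (D * (s * (q * c * J0))) with (s * ((D * q) * (c * J0))) by ring.
    replace (S1 * (c * BI * Rp)) with (S1 * (Rp * (c * BI))) by ring.
    apply mono4. lra. split. apply Rmult_le_pos; [lra|nra]. apply mono4. lra. split. nra.
    apply Rmult_le_compat_l; lra. }
  assert (t3 : D * (s * (ee * J0)) <= S1 * (ee * BI)).
  { replace (D * (s * (ee * J0))) with (s * (D * (ee * J0))) by ring.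
    apply mono4. lra. split. repeat apply Rmult_le_pos; lra. assert (ee * J0 <= ee * BI) by (apply Rmult_le_compat_l; lra).
    assert (D * (ee * J0) <= 1 * (ee * BI)) by (apply mono4; split; try lra; repeat apply Rmult_le_pos; lra). lra. }
  assert (t4 : D * (s * J1) <= S1 * BI).
  { replace (D * (s * J1)) with (s * (D * J1)) by ring.
    apply mono4. lra. split. repeat apply Rmult_le_pos; lra. assert (D * J1 <= 1 * BI) by (apply mono4; lra). lra. }
  replace (D * (PE * (al * J0 + s * (q * c * J0 + ee * J0 + J1)))) with
    (PE * (D * (al * J0) + (D * (s * (q * c * J0)) + D * (s * (ee * J0)) + D * (s * J1)))) by ring.
  apply Rmult_le_compat_l; auto. nra.
Qed.

Lemma ineq_inf D al s q c ee J0 J1 io x PE :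
  0 <= D <= 1 -> 0 <= q <= 1 -> 0 <= al <= 1 -> 0 <= s <= 2 * x -> 1 <= x -> 0 <= c -> 0 <= ee ->
  0 <= J0 <= io -> 0 <= J1 <= io -> 0 <= PE ->
  D * (PE * (al * J0 + s * (q * c * J0 + ee * J0 + J1))) <= PE * io * x * (3 + 2 * c + 2 * ee).
Proof.
  intros HD Hq Hal Hs Hx Hc He HI HI1 HPE.
  assert (h1 : al * J0 <= io) by (assert (al * J0 <= 1 * io) by (apply mono4; lra); lra).
  assert (h2 : q * c * J0 <= c * io).
  { replace (q * c * J0) with (q * (c * J0)) by ring. assert (c * J0 <= c * io) by (apply Rmult_le_compat_l; lra).
    assert (q * (c * J0) <= 1 * (c * io)) by (apply mono4; nra). lra. }
  assert (h3 : ee * J0 <= ee * io) by (apply Rmult_le_compat_l; lra).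
  assert (Y : 0 <= al * J0 + s * (q * c * J0 + ee * J0 + J1) <= io + 2 * x * (c * io + ee * io + io)).
  { split. assert (0 <= q * c * J0) by (repeat apply Rmult_le_pos; lra). assert (0 <= ee * J0) by nra.
    assert (0 <= al * J0) by nra. assert (0 <= s * (q * c * J0 + ee * J0 + J1)) by (apply Rmult_le_pos; lra). lra.
    assert (s * (q * c * J0 + ee * J0 + J1) <= 2 * x * (c * io + ee * io + io)).
    { apply mono4. lra. split. assert (0 <= q * c * J0) by (repeat apply Rmult_le_pos; lra). nra. lra. }
    lra. }
  assert (Z : io + 2 * x * (c * io + ee * io + io) <= io * x * (3 + 2 * c + 2 * ee)).
  { assert (0 <= io) by lra. nra. }
  assert (W : 0 <= PE * (al * J0 + s * (q * c * J0 + ee * J0 + J1)) <= PE * (io * x * (3 + 2 * c + 2 * ee))).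
  { split. apply Rmult_le_pos; lra. apply Rmult_le_compat_l; lra. }
  assert (D * (PE * (al * J0 + s * (q * c * J0 + ee * J0 + J1))) <= 1 * (PE * (io * x * (3 + 2 * c + 2 * ee)))).
  { apply mono4; lra. }
  lra.
Qed.

Lemma exp_comb w2 x rm : exp (w2 * x) * exp (- 2 * w2 * (x - rm)) = exp (2 * w2 * rm) * exp (- w2 * x).
Proof. rewrite <- !exp_plus. f_equal. ring. Qed.
Lemma Rpower_succ x p : 0 < x -> Rpower x (1 + p) = x * Rpower x p.
Proof. intros Hx. rewrite Rpower_plus, Rpower_1 by auto. reflexivity. Qed.
Lemma sqrt_le_2x x a : 0 < x -> Rabs a <= x -> sqrt (x ^ 2 + a ^ 2) <= 2 * x.
Proof.
  intros Hx Ha. rewrite <- (sqrt_pow2 (2 * x)) by lra. apply sqrt_le_1_alt.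
  rewrite <- (pow2_abs a). assert (0 <= Rabs a) by apply Rabs_pos. nra.
Qed.

Theorem mainTheorem7 (M a : R) (rstar : R -> R) (om lam : Cx) (m : Z) (F u : R -> Cx) :
  0 < M -> Rabs a < M ->
  tortoise M a rstar ->
  smooth_on_right (rplus M a) F ->
  compact_support_right (rplus M a) F ->
  radial_ode M a rstar om m lam F u ->
  bc_horizon M a om m u ->
  bc_infinity M a rstar om u ->
  0 < snd om ->
  bigO_horizon (rplus M a) (2 * M * snd om) (whiting M a om m u) /\
  bigO_infinity (rplus M a) (snd om) (1 + 2 * M * snd om) (whiting M a om m u) /\
  exists ud : R -> Cx,
    dstar rstar (rplus M a) (whiting M a om m u) ud /\
    bigO_horizon (rplus M a) (2 * M * snd om) ud /\
    bigO_infinity (rplus M a) (snd om) (1 + 2 * M * snd om) ud.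
Proof.
  intros HM Ha Ht _ _ Hode Hh Hi Hw.
  destruct (kerr_facts M a HM Ha) as [h1 [h2 [h3 h4]]].
  assert (Hu := u_cont M a rstar om m lam F u Ht Hode).
  assert (HGc := G_cont M a om m u HM Ha Hu).
  destruct (G_bound M a rstar om m u HM Ha Ht Hu Hh Hi Hw) as [CG [HCG HGb]].
  set (G := Gf M a om m u) in *.
  set (A := CG * (1 + Cnorm om) ^ 2).
  assert (HA : 0 <= A) by (unfold A; apply Rmult_le_pos; auto; apply pow2_ge_0).
  assert (KB := K_bounds M a om G CG HM Ha HCG HGb).
  assert (B0 : forall r, rplus M a < r -> Cnorm (G r) <= A * (1 + kd M a r) ^ 2 * exp (5/4 * snd om * (r - rplus M a)))
    by (intros r Hr; apply (KB r Hr)).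
  assert (B1 : forall r, rplus M a < r -> Cnorm (Kstep M a om G r) <= A * (1 + kd M a r) ^ 2 * exp (5/4 * snd om * (r - rplus M a)))
    by (intros r Hr; apply (KB r Hr)).
  assert (B2 : forall r, rplus M a < r -> Cnorm (Kstep M a om (Kstep M a om G) r) <= A * (1 + kd M a r) ^ 2 * exp (5/4 * snd om * (r - rplus M a)))
    by (intros r Hr; apply (KB r Hr)).
  assert (HG1c : forall r, rplus M a < r -> Ccont (Kstep M a om G) r) by (intros; apply Kstep_cont; auto).
  set (Ifun := fun t => CimpInt (fun r => Phi M a om G t r) (rplus M a)).
  set (I1fun := fun t => CimpInt (fun r => Phi M a om (Kstep M a om G) t r) (rplus M a)).
  set (BI := 2 * (A * Lam M a om / (snd om / 4))).
  assert (HLam : 0 <= Lam M a om) by (unfold Lam; apply pow2_ge_0).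
  assert (HBI : 0 <= BI).
  { unfold BI. apply Rmult_le_pos. lra. apply Rmult_le_pos. apply Rmult_le_pos; auto.
    left; apply Rinv_0_lt_compat; lra. }
  assert (Ib : forall t, rplus M a < t -> Cnorm (Ifun t) <= BI * exp (- 2 * snd om * (t - rminus M a))).
  { intros t Ht0. eapply Rle_trans. apply (proj2 (Phi_int M a om G A t HM Ha Hw HA HGc B0 Ht0)).
    unfold BI. right. field. lra. }
  assert (I1b : forall t, rplus M a < t -> Cnorm (I1fun t) <= BI * exp (- 2 * snd om * (t - rminus M a))).
  { intros t Ht0. eapply Rle_trans. apply (proj2 (Phi_int M a om (Kstep M a om G) A t HM Ha Hw HA HG1c B1 Ht0)).
    unfold BI. right. field. lra. }
  assert (Id : forall x, rplus M a < x -> Cderiv_at Ifun x (I1fun x)).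
  { intros x Hx. apply (I_deriv M a om G A x HM Ha Hw HA HGc B0 B1 B2 Hx). }
  assert (Wder : forall x, rplus M a < x -> Cderiv_at (whiting M a om m u) x (Wd M a om Ifun I1fun x)).
  { intros x Hx. eapply Cderiv_ext. 2: apply (W_deriv M a om Ifun I1fun x); auto; lra.
    intros y. symmetry. apply W_eq. }
  assert (Wn : forall x, rplus M a < x -> Cnorm (whiting M a om m u x) =
            sqrt (x ^ 2 + a ^ 2) * (Rpower (x - rplus M a) (2 * M * snd om) * (exp (snd om * x) * Cnorm (Ifun x)))).
  { intros x Hx. rewrite W_eq. rewrite Cnorm_scal, !Cnorm_mul, Pf_norm, Ef_norm.
    rewrite Rabs_pos_eq by apply sqrt_pos. reflexivity. }
  set (p := 2 * M * snd om).
  assert (Hp : 0 <= p) by (unfold p; apply Rmult_le_pos; lra).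
  assert (Rpos : forall x, 0 <= Rpower x p) by (intros; unfold Rpower; left; apply exp_pos).
  set (ud := fun x => Cscal (Delta M a x / (x ^ 2 + a ^ 2)) (Wd M a om Ifun I1fun x)).
  set (rp := rplus M a) in *. set (rm := rminus M a) in *. set (w2 := snd om) in *.
  set (nc := Cnorm (cPc M om)). set (ne := Cnorm (cEc om)).
  assert (Hnc : 0 <= nc) by apply Cnorm_ge0. assert (Hne : 0 <= ne) by apply Cnorm_ge0.
  assert (Esq : forall x, 0 < x -> x <= sqrt (x ^ 2 + a ^ 2)) by (intros; apply sqrt_ge_r; auto).
  assert (Dfacts : forall x, rp < x -> (0 <= Delta M a x / (x ^ 2 + a ^ 2) <= 1) /\ (Delta M a x / (x ^ 2 + a ^ 2) * / (x - rp) <= / rp)).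
  { intros x Hx. rewrite h4. fold rp rm.
    assert (Hxa : 0 < x ^ 2 + a ^ 2) by nra.
    assert (Hd : (x - rp) * (x - rm) <= x ^ 2 + a ^ 2).
    { assert (h5 := h4 x). unfold Delta in h5. fold rp rm in h5. assert (0 <= a ^ 2) by apply pow2_ge_0. nra. }
    split. split. apply Rdiv_le_0_compat; auto. apply Rmult_le_pos; lra.
    apply (Rmult_le_reg_r (x ^ 2 + a ^ 2)); auto. unfold Rdiv. rewrite Rmult_assoc, Rinv_l, Rmult_1_r by lra. lra.
    replace ((x - rp) * (x - rm) / (x ^ 2 + a ^ 2) * / (x - rp)) with ((x - rm) / (x ^ 2 + a ^ 2)) by (field; lra).
    apply (Rmult_le_reg_r (x ^ 2 + a ^ 2)); auto. unfold Rdiv. rewrite Rmult_assoc, Rinv_l, Rmult_1_r by lra.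
    apply (Rmult_le_reg_l rp); auto. rewrite <- Rmult_assoc, Rinv_r, Rmult_1_l by lra.
    assert (0 <= a ^ 2) by apply pow2_ge_0. nra. }
  split; [|split].
  -
    exists (sqrt ((rp + 1) ^ 2 + a ^ 2) * exp (w2 * (rp + 1)) * BI), 1. split. lra.
    intros x Hx. rewrite Wn by lra. fold rp.
    assert (s1 : 0 <= sqrt (x ^ 2 + a ^ 2) <= sqrt ((rp + 1) ^ 2 + a ^ 2)).
    { split. apply sqrt_pos. apply sqrt_le_1_alt. nra. }
    assert (e1 : 0 <= exp (w2 * x) <= exp (w2 * (rp + 1))).
    { split. left; apply exp_pos. apply exp_mono. nra. }
    assert (i1 : 0 <= Cnorm (Ifun x) <= BI).
    { split. apply Cnorm_ge0. eapply Rle_trans. apply Ib; lra.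
      assert (exp (- 2 * w2 * (x - rm)) <= 1) by (rewrite <- exp_0; apply exp_mono; nra). nra. }
    assert (R1 := Rpos (x - rp)).
    assert (Rpower (x - rp) p * (exp (w2 * x) * Cnorm (Ifun x)) <= Rpower (x - rp) p * (exp (w2 * (rp + 1)) * BI)).
    { apply Rmult_le_compat_l; auto. apply mono4; lra. }
    assert (sqrt (x ^ 2 + a ^ 2) * (Rpower (x - rp) p * (exp (w2 * x) * Cnorm (Ifun x))) <=
            sqrt ((rp + 1) ^ 2 + a ^ 2) * (Rpower (x - rp) p * (exp (w2 * (rp + 1)) * BI))).
    { apply mono4. lra. split. repeat apply Rmult_le_pos; lra. lra. }
    fold p. lra.
  -
    exists (2 * BI * exp (2 * w2 * rm)), (rp + 1 + Rabs a).
    intros x Hx Hx'. assert (Habs := Rabs_pos a). rewrite Wn by lra. fold rp.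
    assert (s1 : 0 <= sqrt (x ^ 2 + a ^ 2) <= 2 * x) by (split; [apply sqrt_pos | apply sqrt_le_2x; lra]).
    assert (r1 : 0 <= Rpower (x - rp) p <= Rpower x p) by (split; [apply Rpos | apply Rle_Rpower_l; lra]).
    assert (i1 : 0 <= exp (w2 * x) * Cnorm (Ifun x) <= BI * (exp (2 * w2 * rm) * exp (- w2 * x))).
    { split. apply Rmult_le_pos. left; apply exp_pos. apply Cnorm_ge0.
      rewrite <- exp_comb. assert (h := Ib x ltac:(lra)). assert (P := exp_pos (w2 * x)).
      replace (BI * (exp (w2 * x) * exp (- 2 * w2 * (x - rm)))) with (exp (w2 * x) * (BI * exp (- 2 * w2 * (x - rm)))) by ring.
      apply Rmult_le_compat_l; lra. }
    fold p. rewrite Rpower_succ by lra.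
    assert (sqrt (x ^ 2 + a ^ 2) * (Rpower (x - rp) p * (exp (w2 * x) * Cnorm (Ifun x))) <=
            (2 * x) * (Rpower x p * (BI * (exp (2 * w2 * rm) * exp (- w2 * x))))).
    { apply mono4. lra. split. apply Rmult_le_pos; lra. apply mono4; lra. }
    replace (2 * BI * exp (2 * w2 * rm) * (exp (- w2 * x) * (x * Rpower x p))) with
      ((2 * x) * (Rpower x p * (BI * (exp (2 * w2 * rm) * exp (- w2 * x))))) by ring.
    lra.
  - exists ud. split; [|split].
    + apply (dstar_of_deriv M a rstar _ _ HM Ha Ht Wder).
    + exists (exp (w2 * (rp + 1)) * (BI + sqrt ((rp + 1) ^ 2 + a ^ 2) * (nc * BI * / rp + ne * BI + BI))), 1.
      split. lra. intros x Hx.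
      destruct (Dfacts x ltac:(lra)) as [D1 D2].
      unfold ud. rewrite Cnorm_scal. rewrite Rabs_pos_eq by lra.
      assert (Hx0 : rplus M a < x) by (unfold rp in Hx; lra).
      eapply Rle_trans. apply Rmult_le_compat_l. lra. apply (Wd_norm M a om Ifun I1fun x Hx0).
      rewrite Pf_norm, Ef_norm. fold rp w2 p nc ne.
      assert (Hq : 0 < / (x - rp)) by (apply Rinv_0_lt_compat; lra).
      assert (Hs0 := Esq x ltac:(lra)).
      assert (al1 : 0 <= Rabs (x / sqrt (x ^ 2 + a ^ 2)) <= 1).
      { split. apply Rabs_pos. rewrite Rabs_pos_eq. apply (Rmult_le_reg_r (sqrt (x ^ 2 + a ^ 2))). lra.
        unfold Rdiv. rewrite Rmult_assoc, Rinv_l, Rmult_1_r by lra. lra.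
        apply Rdiv_le_0_compat; lra. }
      assert (s1 : 0 <= sqrt (x ^ 2 + a ^ 2) <= sqrt ((rp + 1) ^ 2 + a ^ 2)).
      { split. apply sqrt_pos. apply sqrt_le_1_alt. nra. }
      assert (i1 : 0 <= Cnorm (Ifun x) <= BI).
      { split. apply Cnorm_ge0. eapply Rle_trans. apply Ib; lra.
        assert (exp (- 2 * w2 * (x - rm)) <= 1) by (rewrite <- exp_0; apply exp_mono; nra). nra. }
      assert (i2 : 0 <= Cnorm (I1fun x) <= BI).
      { split. apply Cnorm_ge0. eapply Rle_trans. apply I1b; lra.
        assert (exp (- 2 * w2 * (x - rm)) <= 1) by (rewrite <- exp_0; apply exp_mono; nra). nra. }
      assert (PE0 : 0 <= Rpower (x - rp) p * exp (w2 * x)) by (apply Rmult_le_pos; [apply Rpos| left; apply exp_pos]).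
      eapply Rle_trans. apply (ineq_h _ _ _ _ _ _ _ _ BI (sqrt ((rp + 1) ^ 2 + a ^ 2)) (/ rp)); try lra.
      split. apply Rmult_le_pos; lra. lra.
      assert (e1 : exp (w2 * x) <= exp (w2 * (rp + 1))) by (apply exp_mono; nra).
      assert (0 <= BI + sqrt ((rp + 1) ^ 2 + a ^ 2) * (nc * BI * / rp + ne * BI + BI)).
      { assert (0 < / rp) by (apply Rinv_0_lt_compat; lra).
        assert (0 <= nc * BI * / rp + ne * BI + BI). { assert (0 <= nc * BI) by nra. assert (0 <= nc * BI * / rp) by nra. nra. }
        nra. }
      assert (R1 := Rpos (x - rp)).
      replace (exp (w2 * (rp + 1)) * (BI + sqrt ((rp + 1) ^ 2 + a ^ 2) * (nc * BI * / rp + ne * BI + BI)) * Rpower (x - rp) p)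
        with (Rpower (x - rp) p * exp (w2 * (rp + 1)) * (BI + sqrt ((rp + 1) ^ 2 + a ^ 2) * (nc * BI * / rp + ne * BI + BI))) by ring.
      apply Rmult_le_compat_r. auto. apply Rmult_le_compat_l; auto.
    + exists (BI * exp (2 * w2 * rm) * (3 + 2 * nc + 2 * ne)), (rp + 1 + Rabs a).
      intros x Hx Hx'. assert (Habs := Rabs_pos a).
      destruct (Dfacts x ltac:(lra)) as [D1 D2].
      unfold ud. rewrite Cnorm_scal. rewrite Rabs_pos_eq by lra.
      assert (Hx0 : rplus M a < x) by (unfold rp in Hx; lra).
      eapply Rle_trans. apply Rmult_le_compat_l. lra. apply (Wd_norm M a om Ifun I1fun x Hx0).
      rewrite Pf_norm, Ef_norm. fold rp w2 p nc ne.
      assert (Hq : 0 <= / (x - rp) <= 1).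
      { split. left; apply Rinv_0_lt_compat; lra. rewrite <- Rinv_1. apply Rinv_le_contravar; lra. }
      assert (Hs0 := Esq x ltac:(lra)).
      assert (al1 : 0 <= Rabs (x / sqrt (x ^ 2 + a ^ 2)) <= 1).
      { split. apply Rabs_pos. rewrite Rabs_pos_eq. apply (Rmult_le_reg_r (sqrt (x ^ 2 + a ^ 2))). lra.
        unfold Rdiv. rewrite Rmult_assoc, Rinv_l, Rmult_1_r by lra. lra.
        apply Rdiv_le_0_compat; lra. }
      assert (s1 : 0 <= sqrt (x ^ 2 + a ^ 2) <= 2 * x) by (split; [apply sqrt_pos | apply sqrt_le_2x; lra]).
      assert (i1 : 0 <= Cnorm (Ifun x) <= BI * exp (- 2 * w2 * (x - rm))) by (split; [apply Cnorm_ge0| apply Ib; lra]).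
      assert (i2 : 0 <= Cnorm (I1fun x) <= BI * exp (- 2 * w2 * (x - rm))) by (split; [apply Cnorm_ge0| apply I1b; lra]).
      assert (PE0 : 0 <= Rpower (x - rp) p * exp (w2 * x)) by (apply Rmult_le_pos; [apply Rpos| left; apply exp_pos]).
      eapply Rle_trans. apply (ineq_inf _ _ _ _ _ _ _ _ (BI * exp (- 2 * w2 * (x - rm))) x); try lra.
      assert (r1 : 0 <= Rpower (x - rp) p <= Rpower x p) by (split; [apply Rpos | apply Rle_Rpower_l; lra]).
      rewrite Rpower_succ by lra.
      assert (E : Rpower (x - rp) p * exp (w2 * x) * (BI * exp (- 2 * w2 * (x - rm))) * x * (3 + 2 * nc + 2 * ne)
               = Rpower (x - rp) p * (BI * exp (2 * w2 * rm) * (3 + 2 * nc + 2 * ne)) * (exp (- w2 * x) * x)).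
      { replace (Rpower (x - rp) p * exp (w2 * x) * (BI * exp (- 2 * w2 * (x - rm))) * x * (3 + 2 * nc + 2 * ne))
          with (Rpower (x - rp) p * BI * (3 + 2 * nc + 2 * ne) * x * (exp (w2 * x) * exp (- 2 * w2 * (x - rm)))) by ring.
        rewrite exp_comb. ring. }
      rewrite E.
      assert (0 <= BI * exp (2 * w2 * rm) * (3 + 2 * nc + 2 * ne)).
      { apply Rmult_le_pos. apply Rmult_le_pos; auto. left; apply exp_pos. lra. }
      assert (0 <= exp (- w2 * x) * x) by (apply Rmult_le_pos; [left; apply exp_pos|lra]).
      replace (BI * exp (2 * w2 * rm) * (3 + 2 * nc + 2 * ne) * (exp (- w2 * x) * (x * Rpower x p)))
        with (Rpower x p * (BI * exp (2 * w2 * rm) * (3 + 2 * nc + 2 * ne)) * (exp (- w2 * x) * x)) by ring.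
      apply Rmult_le_compat_r; auto. apply Rmult_le_compat_r; auto. lra.
Qed.
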